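(* Let $f,g\in\mathcal{F}$ with $g$ continuous on $[0,1]$ and $f\succsim g$. Then $I\in\mathcal{I}_{f,g}$ is an extreme point of $\mathcal{I}_{f,g}$ if and only if there exists a (possibly empty) countable collection $\{X_n\}$ of non-degenerate disjoint intervals $X_n=[a_n,b_n]\subseteq[0,1]$ such that: (1) for all $x\notin\bigcup_n X_n$, $I(x)\in\{I_f(x),I_g(x)\}$; (2) for each $n$, $I|_{X_n}$ is affine, $I_f<I<I_g$ on $\mathrm{int}(X_n)$, and at least one of: (a) there is $y\in\{a_n,b_n\}$ with $I(x)=I_g(y)+I_g'(y)(x-y)$ for all $x\in X_n$; (b) for each $x\in\{a_n,b_n\}$, either $I(x)=I_f(x)$, or there exists $m$ with $b_m=a_n$ or $b_n=a_m$ (the shared endpoint being $x$) such that $I|_{X_m}$ satisfies (a).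
   Context: $\mathcal{F}=\{f\in L^1([0,1]): f$ non-decreasing$\}$, $m_f=\int_0^1 f$, $I_\varphi(x)=\int_0^x\varphi-m_\varphi$; $f\succsim g$ means $m_f=m_g$ and $\int_0^x f\le\int_0^x g$ for all $x$. $\mathcal{I}_{f,g}=\{I:[0,1]\to\mathbb{R}$ continuous convex$:\ I_f\le I\le I_g,\ \partial I(x)\subseteq[f(0),f(1)]\ \forall x\in(0,1)\}$. *)

(* Defs.v *)
From Stdlib Require Import Reals.
From Coquelicot Require Import Coquelicot.
Open Scope R_scope.

Definition I01 (x : R) : Prop := 0 <= x <= 1.

(* f ∈ F : non-decreasing on [0,1] and integrable on [0,1]
   (integrability is automatic for monotone functions on [0,1]) *)
Definition inF (f : R -> R) : Prop :=
  (forall x y, 0 <= x -> x <= y -> y <= 1 -> f x <= f y) /\ ex_RInt f 0 1.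

Definition mean (phi : R -> R) : R := RInt phi 0 1.

Definition Iphi (phi : R -> R) (x : R) : R := RInt phi 0 x - mean phi.

Definition majorizes (f g : R -> R) : Prop :=
  mean f = mean g /\ forall x, I01 x -> RInt f 0 x <= RInt g 0 x.

Definition cont01 (h : R -> R) : Prop :=
  forall x, I01 x -> filterlim h (within I01 (locally x)) (locally (h x)).

Definition convex01 (h : R -> R) : Prop :=
  forall x y t, I01 x -> I01 y -> 0 <= t <= 1 ->
    h (t * x + (1 - t) * y) <= t * h x + (1 - t) * h y.

Definition subdiff (h : R -> R) (x s : R) : Prop :=
  forall y, I01 y -> h x + s * (y - x) <= h y.

Definition inIfg (f g : R -> R) (h : R -> R) : Prop :=
  cont01 h /\ convex01 h /\
  (forall x, I01 x -> Iphi f x <= h x <= Iphi g x) /\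
  (forall x s, 0 < x < 1 -> subdiff h x s -> f 0 <= s <= f 1).

(* extreme point of I_{f,g}; functions are identified by their values on [0,1] *)
Definition extreme_Ifg (f g : R -> R) (h : R -> R) : Prop :=
  inIfg f g h /\
  forall h1 h2 lam, inIfg f g h1 -> inIfg f g h2 -> 0 < lam < 1 ->
    (forall x, I01 x -> h x = lam * h1 x + (1 - lam) * h2 x) ->
    forall x, I01 x -> h1 x = h2 x.

Definition deriv01 (h : R -> R) (y d : R) : Prop :=
  filterlim (fun z => (h z - h y) / (z - y))
    (within (fun z => I01 z /\ z <> y) (locally y)) (locally d).

Definition cond_a (h Ig : R -> R) (a b : R) : Prop :=
  exists y, (y = a \/ y = b) /\
    exists d, deriv01 Ig y d /\
      forall x, a <= x <= b -> h x = Ig y + d * (x - y).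

(* the characterization of extreme points via a countable family of intervals
   X_n = [a n, b n], n ranging over the (possibly empty, finite or infinite)
   index set N ⊆ nat *)
Definition interval_structure (f g h : R -> R) : Prop :=
  exists (N : nat -> Prop) (a b : nat -> R),
    (forall n, N n -> 0 <= a n /\ a n < b n /\ b n <= 1) /\
    (* pairwise disjoint (interiors) *)
    (forall n m, N n -> N m -> n <> m -> b n <= a m \/ b m <= a n) /\
    (forall x, I01 x -> (forall n, N n -> ~ (a n <= x <= b n)) ->
       h x = Iphi f x \/ h x = Iphi g x) /\
    (forall n, N n ->
       (exists al be, forall x, a n <= x <= b n -> h x = al + be * x) /\
       (forall x, a n < x < b n -> Iphi f x < h x < Iphi g x) /\
       (cond_a h (Iphi g) (a n) (b n) \/
        (forall x, (x = a n \/ x = b n) ->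
           h x = Iphi f x \/
           exists m, N m /\
             ((b m = a n /\ x = a n) \/ (b n = a m /\ x = b n)) /\
             cond_a h (Iphi g) (a m) (b m)))).

(* Main.v *)
Require Import Defs.
From Stdlib Require Import Reals Lra Psatz Classical ClassicalEpsilon ZArith Cantor.
From Coquelicot Require Import Coquelicot.
Open Scope R_scope.

Lemma ball_R (x e y : R) : ball x e y <-> Rabs (y - x) < e.
Proof. reflexivity. Qed.

Lemma within_ed (F : R -> R) (D : R -> Prop) (x l : R) :
  filterlim F (within D (locally x)) (locally l) <->
  (forall eps, 0 < eps -> exists del, 0 < del /\
     forall y, D y -> Rabs (y - x) < del -> Rabs (F y - l) < eps).
Proof.
  rewrite filterlim_locally. split.
  - intros H eps Heps. destruct (H (mkposreal eps Heps)) as [d Hd].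
    exists d. split. apply cond_pos. intros y Dy Hy. apply (Hd y). exact Hy. exact Dy.
  - intros H eps. destruct (H eps (cond_pos eps)) as [d [Hd0 Hd]].
    exists (mkposreal d Hd0). intros y Hy Dy. apply Hd; auto.
Qed.

Lemma abs_le_inv (x a : R) : Rabs x <= a -> - a <= x <= a.
Proof. intros H. pose proof (Rle_abs x). pose proof (Rle_abs (- x)). rewrite Rabs_Ropp in H1. lra. Qed.

Lemma abs_lt_inv (x a : R) : Rabs x < a -> - a < x < a.
Proof. intros H. pose proof (Rle_abs x). pose proof (Rle_abs (- x)). rewrite Rabs_Ropp in H1. lra. Qed.

Lemma div_le_l (a b c : R) : 0 < b -> (a / b <= c <-> a <= c * b).
Proof. intros Hb. split; intros H.
  - apply (Rmult_le_compat_r b) in H; [|lra]. field_simplify in H; lra.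
  - apply (Rmult_le_reg_r b); [lra|]. field_simplify; lra. Qed.
Lemma div_le_r (a b c : R) : 0 < b -> (c <= a / b <-> c * b <= a).
Proof. intros Hb. split; intros H.
  - apply (Rmult_le_compat_r b) in H; [|lra]. field_simplify in H; lra.
  - apply (Rmult_le_reg_r b); [lra|]. field_simplify; lra. Qed.

Lemma conv3 (F : R -> R) p q r : convex01 F -> 0 <= p -> p < q -> q < r -> r <= 1 ->
  (r - p) * F q <= (r - q) * F p + (q - p) * F r.
Proof.
  intros HF Hp Hpq Hqr Hr.
  set (t := (r - q) / (r - p)).
  assert (Ht: 0 <= t <= 1).
  { unfold t; split. apply Rmult_le_pos; [lra|]. left; apply Rinv_0_lt_compat; lra.
    apply div_le_l; lra. }
  assert (Hq : t * p + (1 - t) * r = q). { unfold t. field. lra. }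
  pose proof (HF p r t) as H. rewrite Hq in H.
  assert (I01 p) by (unfold I01; lra). assert (I01 r) by (unfold I01; lra).
  specialize (H H0 H1 Ht).
  apply (Rmult_le_compat_l (r - p)) in H; [|lra].
  replace ((r - p) * (t * F p + (1 - t) * F r)) with ((r - q) * F p + (q - p) * F r) in H.
  exact H. unfold t. field. lra.
Qed.

Lemma subdiff_exists (F : R -> R) x : convex01 F -> 0 < x < 1 -> exists s, subdiff F x s.
Proof.
  intros HF Hx.
  set (E := fun v => exists y, 0 <= y < x /\ v = (F x - F y) / (x - y)).
  assert (Hb : forall y z, 0 <= y < x -> x < z <= 1 -> (F x - F y) / (x - y) <= (F z - F x) / (z - x)).
  { intros y z Hy Hz. pose proof (conv3 F y x z HF ltac:(lra) ltac:(lra) ltac:(lra) ltac:(lra)).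
    apply div_le_l; [lra|]. unfold Rdiv. rewrite Rmult_assoc.
    apply (Rmult_le_reg_r (z - x)); [lra|].
    replace ((F z - F x) * (/ (z - x) * (x - y)) * (z - x)) with ((F z - F x) * (x - y)) by (field; lra).
    nra. }
  assert (HE : bound E). { exists ((F 1 - F x) / (1 - x)). intros v [y [Hy ->]]. apply Hb; lra. }
  assert (HE2 : exists v, E v). { exists ((F x - F 0) / (x - 0)). exists 0. split; [lra|reflexivity]. }
  destruct (completeness E HE HE2) as [s [Hs1 Hs2]].
  exists s. intros y Hy. unfold I01 in Hy.
  destruct (Rtotal_order y x) as [Hlt | [Heq | Hgt]].
  - assert (Hv : (F x - F y) / (x - y) <= s) by (apply Hs1; exists y; split; [lra|reflexivity]).
    apply div_le_l in Hv; lra.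
  - subst. lra.
  - assert (Hv : s <= (F y - F x) / (y - x)).
    { apply Hs2. intros v [w [Hw ->]]. apply Hb; lra. }
    apply div_le_r in Hv; lra.
Qed.

Lemma convex_of_support (F : R -> R) :
  (forall x, 0 < x < 1 -> exists s, subdiff F x s) -> convex01 F.
Proof.
  intros H x y t Hx Hy Ht. unfold I01 in *.
  destruct (Req_dec t 0) as [->|Ht0].
  { replace (0 * x + (1 - 0) * y) with y by ring. lra. }
  destruct (Req_dec t 1) as [->|Ht1].
  { replace (1 * x + (1 - 1) * y) with x by ring. lra. }
  destruct (Req_dec x y) as [<-|Hxy].
  { replace (t * x + (1 - t) * x) with x by ring. lra. }
  set (z := t * x + (1 - t) * y).
  assert (Hz : 0 < z < 1).
  { unfold z. destruct (Rlt_or_le x y); split; nra. }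
  destruct (H z Hz) as [s Hs].
  pose proof (Hs x ltac:(unfold I01; lra)). pose proof (Hs y ltac:(unfold I01; lra)).
  assert (t * (x - z) + (1 - t) * (y - z) = 0) by (unfold z; ring).
  assert (t * (F z + s * (x - z)) <= t * F x) by (apply Rmult_le_compat_l; lra).
  assert ((1-t) * (F z + s * (y - z)) <= (1-t) * F y) by (apply Rmult_le_compat_l; lra).
  fold z. nra.
Qed.

Lemma conv_lip (F : R -> R) x : convex01 F -> 0 < x < 1 ->
  exists M, 0 < M /\ forall y, x / 2 < y < (x + 1) / 2 -> Rabs (F y - F x) <= M * Rabs (y - x).
Proof.
  intros HF Hx. destruct (subdiff_exists F x HF Hx) as [s Hs].
  set (a := x / 2). set (b := (x + 1) / 2).
  set (A := (F x - F a) / (x - a)). set (B := (F b - F x) / (b - x)).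
  assert (HA : F x - F a = A * (x - a)) by (unfold A, a; field; lra).
  assert (HB : F b - F x = B * (b - x)) by (unfold B, b; field; lra).
  set (M := Rabs s + Rabs A + Rabs B + 1).
  pose proof (Rabs_pos s); pose proof (Rabs_pos A); pose proof (Rabs_pos B).
  pose proof (Rle_abs s); pose proof (Rle_abs A); pose proof (Rle_abs B).
  pose proof (Rle_abs (-s)); pose proof (Rle_abs (-A)); pose proof (Rle_abs (-B)).
  rewrite Rabs_Ropp in H5, H6, H7.
  exists M. split. unfold M; lra.
  intros y Hy. fold a b in Hy.
  assert (Hsy : F x + s * (y - x) <= F y) by (apply Hs; unfold I01, a, b in *; lra).
  destruct (Rtotal_order y x) as [Hlt|[Heq|Hgt]].
  - pose proof (conv3 F a y x HF ltac:(unfold a; lra) ltac:(lra) ltac:(lra) ltac:(lra)) as Hc.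
    assert (Hk : F y - F x <= (x - y) * (- A)).
    { apply (Rmult_le_reg_l (x - a)); [unfold a; lra|].
      replace (F a) with (F x - A * (x - a)) in Hc by lra. nra. }
    rewrite (Rabs_left1 (y - x)) by lra. apply Rabs_le. unfold M.
    assert (s * (x - y) <= Rabs s * (x - y)) by (apply Rmult_le_compat_r; lra).
    assert (- A * (x - y) <= Rabs A * (x - y)) by (apply Rmult_le_compat_r; lra).
    assert (0 <= (Rabs B + 1) * (x - y)) by (apply Rmult_le_pos; lra).
    split; nra.
  - subst. rewrite !Rminus_diag, !Rabs_R0. lra.
  - pose proof (conv3 F x y b HF ltac:(lra) ltac:(lra) ltac:(lra) ltac:(unfold b; lra)) as Hc.
    assert (Hk : F y - F x <= (y - x) * B).
    { apply (Rmult_le_reg_l (b - x)); [unfold b; lra|].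
      replace (F b) with (F x + B * (b - x)) in Hc by lra. nra. }
    rewrite (Rabs_right (y - x)) by lra. apply Rabs_le. unfold M.
    assert (- s * (y - x) <= Rabs s * (y - x)) by (apply Rmult_le_compat_r; lra).
    assert (B * (y - x) <= Rabs B * (y - x)) by (apply Rmult_le_compat_r; lra).
    assert (0 <= (Rabs A + 1) * (y - x)) by (apply Rmult_le_pos; lra).
    split; nra.
Qed.

Lemma conv_cont (F : R -> R) x : convex01 F -> 0 < x < 1 ->
  forall eps, 0 < eps -> exists del, 0 < del /\
     forall y, Rabs (y - x) < del -> Rabs (F y - F x) < eps.
Proof.
  intros HF Hx eps He. destruct (conv_lip F x HF Hx) as [M [HM HL]].
  exists (Rmin (Rmin (x/2) ((1-x)/2)) (eps / (2*M))). split.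
  { apply Rmin_pos; [apply Rmin_pos; lra|]. apply Rdiv_lt_0_compat; lra. }
  intros y Hy. pose proof (Rmin_l (Rmin (x/2) ((1-x)/2)) (eps / (2*M))).
  pose proof (Rmin_r (Rmin (x/2) ((1-x)/2)) (eps / (2*M))).
  pose proof (Rmin_l (x/2) ((1-x)/2)). pose proof (Rmin_r (x/2) ((1-x)/2)).
  assert (Hy2 : Rabs (y - x) < x / 2 /\ Rabs (y - x) < (1 - x) / 2) by lra.
  destruct Hy2 as [Hy2 Hy3]. apply Rabs_def2 in Hy2. apply Rabs_def2 in Hy3.
  eapply Rle_lt_trans. apply HL. lra.
  assert (Rabs (y - x) < eps / (2 * M)) by lra.
  apply (Rmult_lt_compat_l M) in H3; [|lra].
  replace (M * (eps / (2 * M))) with (eps / 2) in H3 by (field; lra). lra.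
Qed.

Lemma conv_cont_within (F : R -> R) x : convex01 F -> 0 < x < 1 ->
  filterlim F (within I01 (locally x)) (locally (F x)).
Proof.
  intros HF Hx. apply within_ed. intros eps He.
  destruct (conv_cont F x HF Hx eps He) as [d [Hd H]]. exists d. split; auto.
Qed.

Section Integ.
Variable f : R -> R.
Hypothesis Hf : inF f.

Lemma f_mono x y : 0 <= x -> x <= y -> y <= 1 -> f x <= f y.
Proof. apply Hf. Qed.

Lemma f_bounds t : I01 t -> f 0 <= f t <= f 1.
Proof. intros [H0 H1]. split; apply f_mono; lra. Qed.

Lemma exf a b : 0 <= a -> a <= b -> b <= 1 -> ex_RInt f a b.
Proof.
  intros Ha Hab Hb. destruct Hf as [_ H].
  apply (ex_RInt_Chasles_2 f 0 a b). lra. apply (ex_RInt_Chasles_1 f 0 b 1). lra. exact H.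
Qed.

Lemma exf' a b : I01 a -> I01 b -> ex_RInt f a b.
Proof.
  intros [Ha Ha'] [Hb Hb']. destruct (Rle_or_lt a b).
  apply exf; lra. apply ex_RInt_swap. apply exf; lra.
Qed.

Lemma Iphi_diff x y : I01 x -> I01 y -> Iphi f y - Iphi f x = RInt f x y.
Proof.
  intros Hx Hy. unfold Iphi.
  assert (H0 : I01 0) by (unfold I01; lra).
  pose proof (RInt_Chasles f 0 x y (exf' 0 x H0 Hx) (exf' x y Hx Hy)) as H.
  change (plus (RInt f 0 x) (RInt f x y)) with (RInt f 0 x + RInt f x y) in H.
  lra.
Qed.

Lemma RInt_lb x y : 0 <= x -> x <= y -> y <= 1 -> f x * (y - x) <= RInt f x y.
Proof.
  intros. assert (H2 : RInt (fun _ => f x) x y <= RInt f x y).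
  { apply RInt_le; auto. apply ex_RInt_const. apply exf; auto.
    intros t Ht. apply f_mono; lra. }
  rewrite RInt_const in H2. change (scal (y - x) (f x)) with ((y - x) * f x) in H2. lra.
Qed.

Lemma RInt_ub x y : 0 <= x -> x <= y -> y <= 1 -> RInt f x y <= f y * (y - x).
Proof.
  intros. assert (H2 : RInt f x y <= RInt (fun _ => f y) x y).
  { apply RInt_le; auto. apply exf; auto. apply ex_RInt_const.
    intros t Ht. apply f_mono; lra. }
  rewrite RInt_const in H2. change (scal (y - x) (f y)) with ((y - x) * f y) in H2. lra.
Qed.

Lemma Iphi_0 : Iphi f 0 = - mean f.
Proof. unfold Iphi. rewrite RInt_point. change (zero : R) with 0. lra. Qed.

Lemma Iphi_1 : Iphi f 1 = 0.
Proof. unfold Iphi, mean. lra. Qed.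

Lemma Iphi_lip x y : I01 x -> I01 y -> Rabs (Iphi f y - Iphi f x) <= (Rabs (f 0) + Rabs (f 1)) * Rabs (y - x).
Proof.
  intros Hx Hy. rewrite Iphi_diff by auto.
  assert (Hb : forall t, I01 t -> Rabs (f t) <= Rabs (f 0) + Rabs (f 1)).
  { intros t Ht. destruct (f_bounds t Ht). apply Rabs_le.
    pose proof (Rle_abs (f 0)); pose proof (Rle_abs (- f 0)); pose proof (Rle_abs (f 1)); pose proof (Rle_abs (- f 1)).
    rewrite Rabs_Ropp in *. pose proof (Rabs_pos (f 0)); pose proof (Rabs_pos (f 1)). lra. }
  destruct Hx as [Hx0 Hx1]; destruct Hy as [Hy0 Hy1].
  destruct (Rle_or_lt x y).
  - pose proof (abs_RInt_le_const f x y (Rabs (f 0) + Rabs (f 1)) H (exf x y Hx0 H Hy1)) as K.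
    rewrite (Rabs_right (y - x)) by lra. rewrite Rmult_comm. apply K.
    intros t Ht. apply Hb. unfold I01; lra.
  - pose proof (abs_RInt_le_const f y x (Rabs (f 0) + Rabs (f 1)) ltac:(lra) (exf y x Hy0 ltac:(lra) Hx1)) as K.
    rewrite <- (opp_RInt_swap f y x) by (apply exf; lra).
    change (Rabs (- RInt f y x) <= (Rabs (f 0) + Rabs (f 1)) * Rabs (y - x)).
    rewrite Rabs_Ropp. rewrite (Rabs_left (y - x)) by lra.
    replace (- (y - x)) with (x - y) by ring. rewrite Rmult_comm. apply K.
    intros t Ht. apply Hb. unfold I01; lra.
Qed.

Lemma conv_of_3pt (F : R -> R) :
  (forall p q r, 0 <= p -> p < q -> q < r -> r <= 1 -> (r - p) * F q <= (r - q) * F p + (q - p) * F r) ->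
  convex01 F.
Proof.
  intros H x y t Hx Hy Ht. unfold I01 in *.
  destruct (Req_dec t 0) as [->|Ht0].
  { replace (0 * x + (1 - 0) * y) with y by ring. lra. }
  destruct (Req_dec t 1) as [->|Ht1].
  { replace (1 * x + (1 - 1) * y) with x by ring. lra. }
  destruct (Rtotal_order x y) as [Hxy|[<-|Hxy]].
  - set (z := t * x + (1 - t) * y).
    assert (Hz : x < z < y) by (unfold z; split; nra).
    specialize (H x z y ltac:(lra) ltac:(lra) ltac:(lra) ltac:(lra)).
    assert (E1 : y - z = t * (y - x)) by (unfold z; ring).
    assert (E2 : z - x = (1 - t) * (y - x)) by (unfold z; ring).
    rewrite E1, E2 in H.
    apply (Rmult_le_reg_l (y - x)); [lra|]. nra.
  - replace (t * x + (1 - t) * x) with x by ring. lra.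
  - set (z := t * x + (1 - t) * y).
    assert (Hz : y < z < x) by (unfold z; split; nra).
    specialize (H y z x ltac:(lra) ltac:(lra) ltac:(lra) ltac:(lra)).
    assert (E1 : x - z = (1 - t) * (x - y)) by (unfold z; ring).
    assert (E2 : z - y = t * (x - y)) by (unfold z; ring).
    rewrite E1, E2 in H.
    apply (Rmult_le_reg_l (x - y)); [lra|]. nra.
Qed.

Lemma Iphi_convex : convex01 (Iphi f).
Proof.
  apply conv_of_3pt. intros p q r Hp Hpq Hqr Hr.
  assert (Ip : I01 p) by (unfold I01; lra). assert (Iq : I01 q) by (unfold I01; lra).
  assert (Ir : I01 r) by (unfold I01; lra).
  pose proof (Iphi_diff p q Ip Iq). pose proof (Iphi_diff q r Iq Ir).
  pose proof (RInt_ub p q ltac:(lra) ltac:(lra) ltac:(lra)).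
  pose proof (RInt_lb q r ltac:(lra) ltac:(lra) ltac:(lra)).
  nra.
Qed.

End Integ.

Lemma RInt_approx (g : R -> R) (Hg : inF g) x z c e : 0 <= x -> x <= z -> z <= 1 ->
  (forall t, x <= t <= z -> Rabs (g t - c) <= e) ->
  Rabs (RInt g x z - c * (z - x)) <= e * (z - x).
Proof.
  intros H1 H2 H3 H.
  pose proof (abs_RInt_le_const (fun t => g t - c) x z e H2) as K.
  assert (Hex : ex_RInt (fun t => g t - c) x z).
  { apply (ex_RInt_minus g (fun _ => c)). apply exf; auto. apply ex_RInt_const. }
  specialize (K Hex H).
  rewrite (RInt_minus g (fun _ => c)) in K; [| apply exf; auto | apply ex_RInt_const].
  rewrite RInt_const in K. change (scal (z - x) c) with ((z - x) * c) in K.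
  change (minus (RInt g x z) ((z - x) * c)) with (RInt g x z - (z - x) * c) in K.
  replace (c * (z - x)) with ((z - x) * c) by ring. replace (e * (z - x)) with ((z - x) * e) by ring. exact K.
Qed.

Lemma Ig_approx (g : R -> R) (Hg : inF g) (Hc : cont01 g) y e : I01 y -> 0 < e ->
  exists del, 0 < del /\ forall z, I01 z -> Rabs (z - y) < del ->
    Rabs (Iphi g z - Iphi g y - g y * (z - y)) <= e * Rabs (z - y).
Proof.
  intros Hy He. destruct (proj1 (within_ed g I01 y (g y)) (Hc y Hy) e He) as [d [Hd H]].
  exists d. split; auto. intros z Hz Hzy.
  rewrite (Iphi_diff g Hg y z Hy Hz).
  destruct Hy as [Hy0 Hy1]. destruct Hz as [Hz0 Hz1].
  destruct (Rle_or_lt y z).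
  - rewrite (Rabs_right (z - y)) by lra. apply RInt_approx; auto.
    intros t Ht. left. apply H. unfold I01; lra. apply Rabs_def2 in Hzy; apply Rabs_def1; lra.
  - rewrite <- (opp_RInt_swap g z y) by (apply exf; auto; lra).
    change (Rabs (- RInt g z y - g y * (z - y)) <= e * Rabs (z - y)).
    replace (- RInt g z y - g y * (z - y)) with (- (RInt g z y - g y * (y - z))) by ring.
    rewrite Rabs_Ropp. rewrite (Rabs_left (z - y)) by lra. replace (- (z - y)) with (y - z) by ring.
    apply RInt_approx; auto; try lra.
    intros t Ht. left. apply H. unfold I01; lra. apply Rabs_def2 in Hzy; apply Rabs_def1; lra.
Qed.

Lemma Ig_deriv (g : R -> R) (Hg : inF g) (Hc : cont01 g) y : I01 y -> deriv01 (Iphi g) y (g y).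
Proof.
  intros Hy. unfold deriv01. apply within_ed. intros e He.
  destruct (Ig_approx g Hg Hc y (e/2) Hy ltac:(lra)) as [d [Hd H]].
  exists d. split; auto. intros z [Hz Hzy] Hzd.
  specialize (H z Hz Hzd).
  assert (Hn : z - y <> 0) by lra.
  replace ((Iphi g z - Iphi g y) / (z - y) - g y) with ((Iphi g z - Iphi g y - g y * (z - y)) / (z - y)) by (field; auto).
  rewrite Rabs_div by auto.
  apply (Rmult_lt_reg_r (Rabs (z - y))). apply Rabs_pos_lt; auto.
  field_simplify. 2: apply Rabs_no_R0; auto.
  assert (0 < Rabs (z - y)) by (apply Rabs_pos_lt; auto). nra.
Qed.

Section Back.
Variables f g h h1 h2 : R -> R.
Variable lam : R.
Hypothesis H1 : inIfg f g h1.
Hypothesis H2 : inIfg f g h2.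
Hypothesis Hlam : 0 < lam < 1.
Hypothesis Hh : forall x, I01 x -> h x = lam * h1 x + (1 - lam) * h2 x.

Let d x := h1 x - h2 x.

Lemma bk_f x : I01 x -> h x = Iphi f x -> d x = 0.
Proof.
  intros Hx E. unfold d. destruct H1 as [_ [_ [B1 _]]]. destruct H2 as [_ [_ [B2 _]]].
  specialize (B1 x Hx); specialize (B2 x Hx); specialize (Hh x Hx).
  assert (lam * (h1 x - h x) + (1 - lam) * (h2 x - h x) = 0) by lra.
  assert (0 <= lam * (h1 x - h x)) by (apply Rmult_le_pos; lra).
  assert (0 <= (1 - lam) * (h2 x - h x)) by (apply Rmult_le_pos; lra).
  assert (Za : lam * (h1 x - h x) = 0) by lra.
  assert (Zb : (1-lam) * (h2 x - h x) = 0) by lra.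
  apply Rmult_integral in Za; apply Rmult_integral in Zb. lra.
Qed.

Lemma bk_g x : I01 x -> h x = Iphi g x -> d x = 0.
Proof.
  intros Hx E. unfold d. destruct H1 as [_ [_ [B1 _]]]. destruct H2 as [_ [_ [B2 _]]].
  specialize (B1 x Hx); specialize (B2 x Hx); specialize (Hh x Hx).
  assert (lam * (h x - h1 x) + (1 - lam) * (h x - h2 x) = 0) by lra.
  assert (0 <= lam * (h x - h1 x)) by (apply Rmult_le_pos; lra).
  assert (0 <= (1 - lam) * (h x - h2 x)) by (apply Rmult_le_pos; lra).
  assert (Za : lam * (h x - h1 x) = 0) by lra.
  assert (Zb : (1-lam) * (h x - h2 x) = 0) by lra.
  apply Rmult_integral in Za; apply Rmult_integral in Zb. lra.
Qed.

Lemma bk_aff a b al be x : 0 <= a -> a < b -> b <= 1 ->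
  (forall y, a <= y <= b -> h y = al + be * y) -> a <= x <= b ->
  (b - a) * d x = (b - x) * d a + (x - a) * d b.
Proof.
  intros Ha Hab Hb Haff Hx.
  destruct (Req_dec x a) as [->|Hxa]. { ring. }
  destruct (Req_dec x b) as [->|Hxb]. { ring. }
  destruct H1 as [_ [C1 _]]. destruct H2 as [_ [C2 _]].
  pose proof (conv3 h1 a x b C1 Ha ltac:(lra) ltac:(lra) Hb) as K1.
  pose proof (conv3 h2 a x b C2 Ha ltac:(lra) ltac:(lra) Hb) as K2.
  assert (Ea : h a = lam * h1 a + (1 - lam) * h2 a) by (apply Hh; unfold I01; lra).
  assert (Eb : h b = lam * h1 b + (1 - lam) * h2 b) by (apply Hh; unfold I01; lra).
  assert (Ex : h x = lam * h1 x + (1 - lam) * h2 x) by (apply Hh; unfold I01; lra).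
  assert (Aff : (b - a) * h x = (b - x) * h a + (x - a) * h b).
  { rewrite (Haff x), (Haff a), (Haff b) by lra. ring. }
  set (u1 := (b - x) * h1 a + (x - a) * h1 b - (b - a) * h1 x).
  set (u2 := (b - x) * h2 a + (x - a) * h2 b - (b - a) * h2 x).
  assert (lam * u1 + (1 - lam) * u2 = 0) by (unfold u1, u2; nra).
  assert (0 <= lam * u1) by (apply Rmult_le_pos; unfold u1; lra).
  assert (0 <= (1 - lam) * u2) by (apply Rmult_le_pos; unfold u2; lra).
  assert (Za : lam * u1 = 0) by lra. assert (Zb : (1 - lam) * u2 = 0) by lra.
  apply Rmult_integral in Za; apply Rmult_integral in Zb.
  destruct Za as [Za|Za]; [lra|]. destruct Zb as [Zb|Zb]; [lra|].
  unfold d, u1, u2 in *. lra.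
Qed.

Lemma bk_conda a b : 0 <= a -> a < b -> b <= 1 ->
  cond_a h (Iphi g) a b -> forall x, a <= x <= b -> d x = 0.
Proof.
  intros Ha Hab Hb [y [Hy [dd [Hd Hform]]]].
  assert (Haff : forall z, a <= z <= b -> h z = (Iphi g y - dd * y) + dd * z).
  { intros z Hz. rewrite Hform; auto. ring. }
  assert (Hya : a <= y <= b) by (destruct Hy; subst; lra).
  assert (Hdy : d y = 0).
  { apply bk_g. unfold I01; lra. rewrite Hform; auto. ring. }
  assert (Hz' : exists z, (y = a /\ z = b) \/ (y = b /\ z = a)).
  { destruct Hy as [Hy|Hy]. exists b; left; auto. exists a; right; auto. }
  destruct Hz' as [z Hz].
  assert (Hdz : d z = 0).
  { destruct H1 as [_ [_ [B1 _]]]. destruct H2 as [_ [_ [B2 _]]].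
    unfold deriv01 in Hd. rewrite within_ed in Hd.
    assert (Key : forall e, 0 < e -> (1 - lam) * d z <= e * Rabs (z - y) /\ - lam * d z <= e * Rabs (z - y)).
    { intros e He. destruct (Hd e He) as [del [Hdel Hdd]].
      set (s := Rmin (1/2) (del / (2 * (b - a)))).
      assert (Hs : 0 < s <= 1/2).
      { unfold s. split. apply Rmin_pos; [lra|]. apply Rdiv_lt_0_compat; lra. apply Rmin_l. }
      set (x := y + s * (z - y)).
      assert (Hzy : Rabs (z - y) = b - a).
      { destruct Hz as [[Ey Ez]|[Ey Ez]]; rewrite Ey, Ez. rewrite Rabs_right; lra. rewrite Rabs_left; lra. }
      assert (Hxab : a <= x <= b).
      { unfold x. destruct Hz as [[Ey Ez]|[Ey Ez]]; rewrite Ey, Ez; split; nra. }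
      assert (Hxy : x - y = s * (z - y)) by (unfold x; ring).
      assert (Hxy0 : x <> y).
      { intro E. assert (s * (z - y) = 0) by lra. apply Rmult_integral in H. destruct Hz as [[Ey Ez]|[Ey Ez]]; lra. }
      assert (Hxyd : Rabs (x - y) < del).
      { rewrite Hxy, Rabs_mult, Hzy, Rabs_right by lra.
        assert (s <= del / (2 * (b - a))) by apply Rmin_r.
        apply (Rmult_le_compat_r (b - a)) in H; [|lra].
        replace (del / (2 * (b - a)) * (b - a)) with (del / 2) in H by (field; lra). lra. }
      assert (Hxi0 : I01 x) by (unfold I01; lra).
      specialize (Hdd x (conj Hxi0 Hxy0) Hxyd).
      assert (Hdx : d x = s * d z).
      { pose proof (bk_aff a b _ _ x Ha Hab Hb Haff Hxab) as K.
        destruct Hz as [[Ey Ez]|[Ey Ez]]; rewrite <- Ey, <- Ez in K; rewrite Hdy in K.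
        - apply (Rmult_eq_reg_l (z - y)); [|lra]. unfold x in *.
          replace (y + s * (z - y) - y) with (s * (z - y)) in K by ring. nra.
        - apply (Rmult_eq_reg_l (y - z)); [|lra]. unfold x in *.
          replace (y - (y + s * (z - y))) with (s * (y - z)) in K by ring. nra. }
      assert (HR : Iphi g x - h x <= e * Rabs (x - y)).
      { rewrite Hform by auto.
        assert (Eq1 : Iphi g x - (Iphi g y + dd * (x - y)) = ((Iphi g x - Iphi g y) / (x - y) - dd) * (x - y)) by (field; lra).
        rewrite Eq1.
        assert (Rabs (((Iphi g x - Iphi g y) / (x - y) - dd) * (x - y)) <= e * Rabs (x - y)).
        { rewrite Rabs_mult. apply Rmult_le_compat_r. apply Rabs_pos. lra. }
        pose proof (Rle_abs (((Iphi g x - Iphi g y) / (x - y) - dd) * (x - y))). lra. }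
      assert (Hxi : I01 x) by (unfold I01; lra).
      specialize (B1 x Hxi); specialize (B2 x Hxi). specialize (Hh x Hxi).
      rewrite Hxy, Rabs_mult, (Rabs_right s) in HR by lra.
      assert (h1 x = h x + (1 - lam) * d x) by (unfold d; lra).
      assert (h2 x = h x - lam * d x) by (unfold d; lra).
      split.
      + apply (Rmult_le_reg_l s); [lra|]. rewrite Hdx in *. nra.
      + apply (Rmult_le_reg_l s); [lra|]. rewrite Hdx in *. nra. }
    assert (Hzy0 : 0 < Rabs (z - y)) by (apply Rabs_pos_lt; destruct Hz as [[Ey Ez]|[Ey Ez]]; lra).
    destruct (Rtotal_order (d z) 0) as [Hn|[E|Hp]]; auto.
    - destruct (Key (lam * (- d z) / (2 * Rabs (z - y)))) as [_ K].
      apply Rdiv_lt_0_compat; nra.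
      replace (lam * - d z / (2 * Rabs (z - y)) * Rabs (z - y)) with (lam * (- d z) / 2) in K by (field; lra). nra.
    - destruct (Key ((1 - lam) * d z / (2 * Rabs (z - y)))) as [K _].
      apply Rdiv_lt_0_compat; nra.
      replace ((1 - lam) * d z / (2 * Rabs (z - y)) * Rabs (z - y)) with ((1 - lam) * d z / 2) in K by (field; lra). nra. }
  intros x Hx. pose proof (bk_aff a b _ _ x Ha Hab Hb Haff Hx) as K.
  destruct Hz as [[Ey Ez]|[Ey Ez]]; rewrite <- Ey, <- Ez in K; rewrite Hdy, Hdz in K.
  - apply (Rmult_eq_reg_l (z - y)); lra.
  - apply (Rmult_eq_reg_l (y - z)); lra.
Qed.

End Back.

Lemma backward f g h : inIfg f g h -> interval_structure f g h -> extreme_Ifg f g h.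
Proof.
  intros Hh [N [a [b [Hab [Hdisj [Hout Hin]]]]]]. split; auto.
  intros h1 h2 lam Hh1 Hh2 Hl Hcomb x Hx.
  assert (Z : forall n, N n -> forall y, a n <= y <= b n -> h1 y - h2 y = 0).
  { intros n Hn. destruct (Hab n Hn) as [Ha0 [Hab' Hb1]].
    destruct (Hin n Hn) as [[al [be Haff]] [_ Hc]].
    destruct Hc as [Hc|Hc].
    - apply (bk_conda f g h h1 h2 lam Hh1 Hh2 Hl Hcomb); auto.
    - assert (E : forall e, (e = a n \/ e = b n) -> h1 e - h2 e = 0).
      { intros e He. destruct (Hc e He) as [Hf|[m [Hm [Hsh Hcm]]]].
        - apply (bk_f f g h h1 h2 lam Hh1 Hh2 Hl Hcomb); auto. unfold I01; destruct He; subst; lra.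
        - destruct (Hab m Hm) as [Ha0' [Hab'' Hb1']].
          apply (bk_conda f g h h1 h2 lam Hh1 Hh2 Hl Hcomb (a m) (b m)); auto.
          destruct Hsh as [[E1 E2]|[E1 E2]]; subst; lra. }
      intros y Hy.
      pose proof (bk_aff f g h h1 h2 lam Hh1 Hh2 Hl Hcomb (a n) (b n) al be y Ha0 Hab' Hb1 Haff Hy) as K.
      cbv beta in K. rewrite (E (a n)), (E (b n)) in K by auto.
      apply (Rmult_eq_reg_l (b n - a n)); lra. }
  destruct (classic (exists n, N n /\ a n <= x <= b n)) as [[n [Hn Hxn]]|Hno].
  - specialize (Z n Hn x Hxn). lra.
  - assert (H' : forall n, N n -> ~ (a n <= x <= b n)) by (intros n Hn Hc; apply Hno; exists n; auto).
    destruct (Hout x Hx H') as [E|E].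
    + pose proof (bk_f f g h h1 h2 lam Hh1 Hh2 Hl Hcomb x Hx E). lra.
    + pose proof (bk_g f g h h1 h2 lam Hh1 Hh2 Hl Hcomb x Hx E). lra.
Qed.

Section Fwd.
Variables f g h : R -> R.
Hypothesis Hf : inF f.
Hypothesis Hg : inF g.
Hypothesis Hgc : cont01 g.
Hypothesis Hmaj : majorizes f g.

Lemma If0_Ig0 : Iphi f 0 = Iphi g 0.
Proof. rewrite (Iphi_0 f), (Iphi_0 g). destruct Hmaj as [E _]. rewrite E. reflexivity. Qed.

Lemma If1_Ig1 : Iphi f 1 = Iphi g 1.
Proof. rewrite (Iphi_1 f), (Iphi_1 g). reflexivity. Qed.

Lemma sq_cont (F : R -> R) x : (forall y, I01 y -> Iphi f y <= F y <= Iphi g y) ->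
  (x = 0 \/ x = 1) -> filterlim F (within I01 (locally x)) (locally (F x)).
Proof.
  intros HB Hx. apply within_ed. intros e He.
  set (M := Rabs (f 0) + Rabs (f 1) + (Rabs (g 0) + Rabs (g 1)) + 1).
  assert (HM : 0 < M) by (unfold M; pose proof (Rabs_pos (f 0)); pose proof (Rabs_pos (f 1));
     pose proof (Rabs_pos (g 0)); pose proof (Rabs_pos (g 1)); lra).
  exists (e / M). split. apply Rdiv_lt_0_compat; lra.
  intros y Hy Hyx.
  assert (Hx01 : I01 x) by (unfold I01; destruct Hx; lra).
  assert (Efg : Iphi f x = Iphi g x) by (destruct Hx; subst; [apply If0_Ig0|apply If1_Ig1]).
  pose proof (HB x Hx01) as Bx. pose proof (HB y Hy) as By.
  pose proof (Iphi_lip f Hf x y Hx01 Hy) as Lf. pose proof (Iphi_lip g Hg x y Hx01 Hy) as Lg.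
  assert (Hm : M * Rabs (y - x) < e).
  { apply (Rmult_lt_compat_l M) in Hyx; auto. replace (M * (e / M)) with e in Hyx by (field; lra). auto. }
  assert (Lf' : Rabs (Iphi f y - Iphi f x) <= M * Rabs (y - x)).
  { eapply Rle_trans. apply Lf. apply Rmult_le_compat_r. apply Rabs_pos. unfold M.
    pose proof (Rabs_pos (g 0)); pose proof (Rabs_pos (g 1)); lra. }
  assert (Lg' : Rabs (Iphi g y - Iphi g x) <= M * Rabs (y - x)).
  { eapply Rle_trans. apply Lg. apply Rmult_le_compat_r. apply Rabs_pos. unfold M.
    pose proof (Rabs_pos (f 0)); pose proof (Rabs_pos (f 1)); lra. }
  apply abs_le_inv in Lf'. apply abs_le_inv in Lg'. apply Rabs_def1; lra.
Qed.

Lemma inIfg_of (F : R -> R) : convex01 F -> (forall y, I01 y -> Iphi f y <= F y <= Iphi g y) ->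
  inIfg f g F.
Proof.
  intros HC HB. split; [|split; [auto|split; [auto|]]].
  - intros x Hx. destruct (Req_dec x 0) as [->|H0]. apply sq_cont; auto.
    destruct (Req_dec x 1) as [->|H1]. apply sq_cont; auto.
    apply conv_cont_within; auto. unfold I01 in Hx; lra.
  - intros x s Hx Hs.
    assert (I0 : I01 0) by (unfold I01; lra). assert (I1 : I01 1) by (unfold I01; lra).
    assert (Ix : I01 x) by (unfold I01; lra).
    pose proof (Hs 0 I0) as S0. pose proof (Hs 1 I1) as S1.
    pose proof (HB 0 I0). pose proof (HB 1 I1). pose proof (HB x Ix).
    pose proof If0_Ig0. pose proof If1_Ig1.
    pose proof (Iphi_diff f Hf 0 x I0 Ix). pose proof (Iphi_diff f Hf x 1 Ix I1).
    pose proof (RInt_lb f Hf 0 x ltac:(lra) ltac:(lra) ltac:(lra)).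
    pose proof (RInt_ub f Hf x 1 ltac:(lra) ltac:(lra) ltac:(lra)).
    split; nra.
Qed.

End Fwd.

Lemma convex_ext (F G : R -> R) : (forall y, F y = G y) -> convex01 G -> convex01 F.
Proof. intros E HG x y t Hx Hy Ht. rewrite !E. apply HG; auto. Qed.

Lemma convex_add (F G : R -> R) : convex01 F -> convex01 G -> convex01 (fun y => F y + G y).
Proof. intros HF HG x y t Hx Hy Ht. pose proof (HF x y t Hx Hy Ht). pose proof (HG x y t Hx Hy Ht). lra. Qed.

Lemma convex_scal (c : R) (F : R -> R) : 0 <= c -> convex01 F -> convex01 (fun y => c * F y).
Proof. intros Hc HF x y t Hx Hy Ht. pose proof (HF x y t Hx Hy Ht).
  apply (Rmult_le_compat_l c) in H; auto. lra. Qed.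

Lemma convex_aff (F : R -> R) A B : convex01 F -> convex01 (fun y => F y + (A + B * y)).
Proof. intros HF x y t Hx Hy Ht. pose proof (HF x y t Hx Hy Ht). nra. Qed.

Section Kfun.
Variable h : R -> R.
Hypothesis Hc : convex01 h.

Definition ln (t m y : R) := h t + m * (y - t).
Definition Kseg (t m t' m' y : R) :=
  if Rle_dec y t then ln t m y else if Rle_dec y t' then h y else ln t' m' y.
Definition Kl (t m y : R) := if Rle_dec y t then h y else ln t m y.
Definition Kr (t m y : R) := if Rle_dec y t then ln t m y else h y.

Lemma supp_slope x t s m : I01 x -> I01 t -> t < x -> subdiff h t m -> subdiff h x s -> m <= s.
Proof.
  intros Hx Ht Htx Hm Hs. pose proof (Hm x Hx). pose proof (Hs t Ht).
  assert ((s - m) * (x - t) >= 0) by lra. nra.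
Qed.

Lemma Kseg_convex t m t' m' : I01 t -> I01 t' -> t <= t' -> m <= m' ->
  subdiff h t m -> subdiff h t' m' -> convex01 (Kseg t m t' m').
Proof.
  intros Ht Ht' Htt Hmm Hm Hm'. apply convex_of_support. intros x Hx.
  assert (Lt : forall y, I01 y -> ln t m y <= Kseg t m t' m' y).
  { intros y Hy. unfold Kseg, ln. destruct (Rle_dec y t). lra. destruct (Rle_dec y t').
    apply Hm; auto. pose proof (Hm t' Ht'). nra. }
  assert (Lt' : forall y, I01 y -> ln t' m' y <= Kseg t m t' m' y).
  { intros y Hy. unfold Kseg, ln. destruct (Rle_dec y t). pose proof (Hm' t Ht). nra.
    destruct (Rle_dec y t'). apply Hm'; auto. lra. }
  destruct (Rle_dec x t).
  - exists m. intros y Hy. specialize (Lt y Hy). unfold Kseg at 1.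
    destruct (Rle_dec x t); [|contradiction]. unfold ln in *. lra.
  - destruct (Rlt_dec x t').
    + destruct (subdiff_exists h x Hc Hx) as [s Hs]. exists s.
      assert (Ix : I01 x) by (unfold I01; lra).
      assert (Hms : m <= s) by (apply (supp_slope x t); auto; lra).
      assert (Hsm : s <= m').
      { pose proof (Hs t' Ht'). pose proof (Hm' x Ix). assert ((m' - s) * (t' - x) >= 0) by lra. nra. }
      intros y Hy. unfold Kseg at 1. destruct (Rle_dec x t); [contradiction|].
      destruct (Rle_dec x t'); [|lra].
      unfold Kseg, ln. destruct (Rle_dec y t).
      * pose proof (Hs t Ht). nra.
      * destruct (Rle_dec y t'). apply Hs; auto. pose proof (Hs t' Ht'). nra.
    + exists m'. intros y Hy. specialize (Lt' y Hy).
      assert (E : Kseg t m t' m' x = ln t' m' x).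
      { unfold Kseg. destruct (Rle_dec x t); [contradiction|]. destruct (Rle_dec x t').
        assert (x = t') by lra. subst. unfold ln. ring. reflexivity. }
      rewrite E. unfold ln in *. lra.
Qed.

Lemma Kl_convex t m : I01 t -> subdiff h t m -> convex01 (Kl t m).
Proof.
  intros Ht Hm. apply convex_of_support. intros x Hx.
  destruct (Rlt_dec x t).
  - destruct (subdiff_exists h x Hc Hx) as [s Hs]. exists s.
    assert (Ix : I01 x) by (unfold I01; lra).
    assert (Hsm : s <= m).
    { pose proof (Hs t Ht). pose proof (Hm x Ix). assert ((m - s) * (t - x) >= 0) by lra. nra. }
    intros y Hy. unfold Kl at 1. destruct (Rle_dec x t); [|lra].
    unfold Kl, ln. destruct (Rle_dec y t). apply Hs; auto. pose proof (Hs t Ht). nra.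
  - exists m. intros y Hy.
    assert (E : Kl t m x = ln t m x).
    { unfold Kl. destruct (Rle_dec x t). assert (x = t) by lra. subst. unfold ln. ring. reflexivity. }
    rewrite E. unfold Kl, ln. destruct (Rle_dec y t). pose proof (Hm y Hy). lra. lra.
Qed.

Lemma Kr_convex t m : I01 t -> subdiff h t m -> convex01 (Kr t m).
Proof.
  intros Ht Hm. apply convex_of_support. intros x Hx.
  destruct (Rle_dec x t).
  - exists m. intros y Hy. unfold Kr at 1. destruct (Rle_dec x t); [|contradiction].
    unfold Kr, ln. destruct (Rle_dec y t). lra. pose proof (Hm y Hy). lra.
  - destruct (subdiff_exists h x Hc Hx) as [s Hs]. exists s.
    assert (Ix : I01 x) by (unfold I01; lra).
    assert (Hms : m <= s) by (apply (supp_slope x t); auto; lra).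
    intros y Hy. unfold Kr at 1. destruct (Rle_dec x t); [contradiction|].
    unfold Kr, ln. destruct (Rle_dec y t). pose proof (Hs t Ht). nra. apply Hs; auto.
Qed.

End Kfun.

Section GL.
Variable h : R -> R.
Hypothesis Hc : convex01 h.
Variables t1 t2 t3 t4 m1 m2 m3 m4 a1 a2 a3 : R.
Hypothesis I1 : I01 t1. Hypothesis I2 : I01 t2. Hypothesis I3 : I01 t3. Hypothesis I4 : I01 t4.
Hypothesis T12 : t1 <= t2. Hypothesis T23 : t2 <= t3. Hypothesis T34 : t3 <= t4.
Hypothesis M12 : m1 <= m2. Hypothesis M23 : m2 <= m3. Hypothesis M34 : m3 <= m4.
Hypothesis S1 : subdiff h t1 m1. Hypothesis S2 : subdiff h t2 m2.
Hypothesis S3 : subdiff h t3 m3. Hypothesis S4 : subdiff h t4 m4.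
Hypothesis Halpha : forall y, a1 * (ln h t2 m2 y - ln h t1 m1 y) + a2 * (ln h t3 m3 y - ln h t2 m2 y)
   + a3 * (ln h t4 m4 y - ln h t3 m3 y) = 0.

Let K1 := Kseg h t1 m1 t2 m2.
Let K2 := Kseg h t2 m2 t3 m3.
Let K3 := Kseg h t3 m3 t4 m4.
Let l1 := ln h t1 m1. Let l2 := ln h t2 m2. Let l3 := ln h t3 m3. Let l4 := ln h t4 m4.

Definition psi y := a1 * (K1 y - l1 y) + a2 * (K2 y - l2 y) + a3 * (K3 y - l3 y).

Lemma decomp y : h y = Kl h t1 m1 y + K1 y + K2 y + K3 y + Kr h t4 m4 y - (l1 y + l2 y + l3 y + l4 y).
Proof.
  unfold K1, K2, K3, l1, l2, l3, l4, Kl, Kr, Kseg.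
  destruct (Rle_dec y t1); destruct (Rle_dec y t2); destruct (Rle_dec y t3); destruct (Rle_dec y t4);
  try lra.
Qed.

Lemma psi_conv eps : 0 <= 1 + eps * a1 -> 0 <= 1 + eps * a2 -> 0 <= 1 + eps * a3 ->
  convex01 (fun y => h y + eps * psi y).
Proof.
  intros P1 P2 P3.
  set (A := - ((h t1 - m1 * t1) + (h t2 - m2 * t2) + (h t3 - m3 * t3) + (h t4 - m4 * t4))
             - eps * (a1 * (h t1 - m1 * t1) + a2 * (h t2 - m2 * t2) + a3 * (h t3 - m3 * t3))).
  set (B := - (m1 + m2 + m3 + m4) - eps * (a1 * m1 + a2 * m2 + a3 * m3)).
  apply (convex_ext _ (fun y => (Kl h t1 m1 y + ((1 + eps * a1) * K1 y + ((1 + eps * a2) * K2 y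
        + ((1 + eps * a3) * K3 y + Kr h t4 m4 y)))) + (A + B * y))).
  - intros y. rewrite (decomp y) at 1. unfold psi, A, B, l1, l2, l3, l4, ln. ring.
  - apply convex_aff. apply convex_add. apply Kl_convex; auto.
    apply convex_add. apply convex_scal; auto. apply Kseg_convex; auto.
    apply convex_add. apply convex_scal; auto. apply Kseg_convex; auto.
    apply convex_add. apply convex_scal; auto. apply Kseg_convex; auto.
    apply Kr_convex; auto.
Qed.

Lemma psi_left y : y <= t1 -> psi y = 0.
Proof.
  intros Hy. unfold psi, K1, K2, K3, Kseg.
  destruct (Rle_dec y t1); [|lra]. destruct (Rle_dec y t2); [|lra]. destruct (Rle_dec y t3); [|lra].
  unfold l1, l2, l3. ring.
Qed.

Lemma psi_right y : t4 < y -> psi y = 0.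
Proof.
  intros Hy. unfold psi, K1, K2, K3, Kseg.
  destruct (Rle_dec y t1); [lra|]. destruct (Rle_dec y t2); [lra|]. destruct (Rle_dec y t3); [lra|].
  destruct (Rle_dec y t4); [lra|]. pose proof (Halpha y). unfold l1, l2, l3. lra.
Qed.

Lemma psi_12 y : t1 <= y <= t2 -> psi y = a1 * (h y - l1 y).
Proof.
  intros Hy. unfold psi, K1, K2, K3, Kseg.
  destruct (Rle_dec y t2); [|lra]. destruct (Rle_dec y t3); [|lra].
  destruct (Rle_dec y t1).
  - assert (y = t1) by lra. subst. unfold l1, l2, l3, ln. ring.
  - unfold l2, l3. ring.
Qed.

Lemma psi_23 y : t2 < y <= t3 -> psi y = a1 * (l2 y - l1 y) + a2 * (h y - l2 y).
Proof.
  intros Hy. unfold psi, K1, K2, K3, Kseg.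
  destruct (Rle_dec y t1); [lra|]. destruct (Rle_dec y t2); [lra|]. destruct (Rle_dec y t3); [|lra].
  unfold l2, l3. ring.
Qed.

Lemma psi_34 y : t3 < y <= t4 -> psi y = a3 * (h y - l4 y).
Proof.
  intros Hy. unfold psi, K1, K2, K3, Kseg.
  destruct (Rle_dec y t1); [lra|]. destruct (Rle_dec y t2); [lra|]. destruct (Rle_dec y t3); [lra|].
  destruct (Rle_dec y t4); [|lra]. pose proof (Halpha y). unfold l1, l2, l3, l4 in *. lra.
Qed.

End GL.

Lemma alpha_sol (s1 s2 s3 z1 z2 z3 y : R) : s1 <> 0 -> s2 <> 0 -> s3 <> 0 ->
  (z3 - z2) / s1 * (s1 * (y - z1)) + (z1 - z3) / s2 * (s2 * (y - z2)) + (z2 - z1) / s3 * (s3 * (y - z3)) = 0.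
Proof. intros. field. auto. Qed.

Definition en (n : nat) : R := INR (fst (Cantor.of_nat n)) / INR (S (snd (Cantor.of_nat n))).

Lemma INR_Zto_nat z : (0 <= z)%Z -> INR (Z.to_nat z) = IZR z.
Proof. intros H. rewrite INR_IZR_INZ. rewrite Z2Nat.id; auto. Qed.

Lemma en_dense u v : 0 <= u -> u < v -> exists n, u < en n < v.
Proof.
  intros Hu Huv.
  destruct (archimed (1 / (v - u))) as [A1 A2].
  assert (Hp : 0 < 1 / (v - u)) by (apply Rdiv_lt_0_compat; lra).
  assert (Hz : (0 <= up (1 / (v - u)))%Z) by (apply le_IZR; lra).
  set (j := Z.to_nat (up (1 / (v - u)))).
  assert (HJ : 1 / (v - u) < INR (S j)).
  { rewrite S_INR. unfold j. rewrite INR_Zto_nat; auto. lra. }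
  set (J := INR (S j)).
  assert (HJp : 0 < J) by (unfold J; apply lt_0_INR; lia).
  destruct (archimed (u * J)) as [B1 B2].
  assert (Hz2 : (0 <= up (u * J))%Z) by (apply le_IZR; nra).
  set (i := Z.to_nat (up (u * J))).
  assert (Hi : INR i = IZR (up (u * J))) by (unfold i; apply INR_Zto_nat; auto).
  exists (Cantor.to_nat (i, j)). unfold en. rewrite Cantor.cancel_of_to. simpl fst; simpl snd. fold J.
  rewrite Hi.
  assert (H1 : 1 < (v - u) * J).
  { assert (E : 1 / (v - u) * (v - u) = 1) by (field; lra). set (w := 1 / (v - u)) in *. assert (0 < v - u) by lra. unfold J. nra. }
  split.
  - apply (Rmult_lt_reg_r J); auto. unfold Rdiv. rewrite Rmult_assoc, Rinv_l, Rmult_1_r by lra. lra.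
  - apply (Rmult_lt_reg_r J); auto. unfold Rdiv. rewrite Rmult_assoc, Rinv_l, Rmult_1_r by lra. nra.
Qed.

Lemma min_index (P : nat -> Prop) k : P k -> exists k', P k' /\ forall j, (j < k')%nat -> ~ P j.
Proof.
  revert P. induction k using (well_founded_induction lt_wf). intros P Hk.
  destruct (Classical_Prop.classic (exists j, (j < k)%nat /\ P j)) as [[j [Hj Pj]]|Hn].
  - apply (H j Hj P Pj).
  - exists k. split; auto. intros j Hj Pj. apply Hn. exists j; auto.
Qed.

Lemma cpt_of_ed (F : R -> R) x :
  (forall e, 0 < e -> exists d, 0 < d /\ forall y, Rabs (y - x) < d -> Rabs (F y - F x) < e) ->
  continuity_pt F x.
Proof.
  intros H e He. destruct (H e He) as [d [Hd Hy]]. exists d. split; auto.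
  intros y [_ Hyd]. simpl in *. unfold R_dist in *. apply Hy; auto.
Qed.

Section Fwd.
Variables f g h : R -> R.
Hypothesis Hf : inF f.
Hypothesis Hg : inF g.
Hypothesis Hgc : cont01 g.
Hypothesis Hmaj : majorizes f g.
Hypothesis Hh : inIfg f g h.

Definition U x := I01 x /\ Iphi f x < h x < Iphi g x.

Lemma hconv : convex01 h.
Proof. apply Hh. Qed.

Lemma hbounds x : I01 x -> Iphi f x <= h x <= Iphi g x.
Proof. apply Hh. Qed.

Lemma U_int x : U x -> 0 < x < 1.
Proof.
  intros [[H0 H1] H]. split.
  - destruct (Req_dec x 0) as [->|]; [|lra]. rewrite (If0_Ig0 f g Hmaj) in H. lra.
  - destruct (Req_dec x 1) as [->|]; [|lra]. rewrite (If1_Ig1 f g) in H. lra.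
Qed.

Lemma h0 : h 0 = Iphi f 0.
Proof. pose proof (hbounds 0 ltac:(unfold I01; lra)). rewrite <- (If0_Ig0 f g Hmaj) in H. lra. Qed.
Lemma h1 : h 1 = Iphi f 1.
Proof. pose proof (hbounds 1 ltac:(unfold I01; lra)). rewrite <- (If1_Ig1 f g) in H. lra. Qed.
Lemma hg0 : h 0 = Iphi g 0.
Proof. rewrite h0. apply (If0_Ig0 f g Hmaj). Qed.
Lemma hg1 : h 1 = Iphi g 1.
Proof. rewrite h1. apply (If1_Ig1 f g). Qed.

Lemma Iphi_ed (F : R -> R) (HF : inF F) x : 0 < x < 1 ->
  forall e, 0 < e -> exists d, 0 < d /\ forall y, Rabs (y - x) < d -> Rabs (Iphi F y - Iphi F x) < e.
Proof.
  intros Hx e He. set (M := Rabs (F 0) + Rabs (F 1) + 1).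
  assert (HM : 0 < M) by (unfold M; pose proof (Rabs_pos (F 0)); pose proof (Rabs_pos (F 1)); lra).
  exists (Rmin (Rmin x (1 - x)) (e / M)). split.
  { apply Rmin_pos; [apply Rmin_pos; lra|]. apply Rdiv_lt_0_compat; lra. }
  intros y Hy. pose proof (Rmin_l (Rmin x (1 - x)) (e / M)). pose proof (Rmin_r (Rmin x (1 - x)) (e / M)).
  pose proof (Rmin_l x (1 - x)). pose proof (Rmin_r x (1-x)).
  assert (Hy' : I01 y) by (apply abs_lt_inv in Hy; unfold I01; lra).
  eapply Rle_lt_trans. apply (Iphi_lip F HF x y ltac:(unfold I01; lra) Hy').
  apply Rle_lt_trans with (M * Rabs (y - x)).
  apply Rmult_le_compat_r. apply Rabs_pos. unfold M; lra.
  assert (Rabs (y - x) < e / M) by lra. apply (Rmult_lt_compat_l M) in H3; auto.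
  replace (M * (e / M)) with e in H3 by (field; lra). auto.
Qed.

Lemma U_open x : U x -> exists eta, 0 < eta /\ forall y, Rabs (y - x) < eta -> U y.
Proof.
  intros HU. pose proof (U_int x HU) as Hx. destruct HU as [Hx1 [Ha Hb]].
  set (e := Rmin (h x - Iphi f x) (Iphi g x - h x) / 2).
  assert (He : 0 < e) by (unfold e; apply Rdiv_lt_0_compat; [apply Rmin_pos; lra|lra]).
  pose proof (Rmin_l (h x - Iphi f x) (Iphi g x - h x)). pose proof (Rmin_r (h x - Iphi f x) (Iphi g x - h x)).
  destruct (conv_cont h x hconv Hx e He) as [d1 [D1 P1]].
  destruct (Iphi_ed f Hf x Hx e He) as [d2 [D2 P2]].
  destruct (Iphi_ed g Hg x Hx e He) as [d3 [D3 P3]].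
  exists (Rmin (Rmin d1 d2) (Rmin d3 (Rmin x (1 - x)))). split.
  { repeat apply Rmin_pos; lra. }
  intros y Hy.
  pose proof (Rmin_l (Rmin d1 d2) (Rmin d3 (Rmin x (1 - x)))). pose proof (Rmin_r (Rmin d1 d2) (Rmin d3 (Rmin x (1 - x)))).
  pose proof (Rmin_l d1 d2). pose proof (Rmin_r d1 d2). pose proof (Rmin_l d3 (Rmin x (1 - x))). pose proof (Rmin_r d3 (Rmin x (1 - x))).
  pose proof (Rmin_l x (1 - x)). pose proof (Rmin_r x (1-x)).
  specialize (P1 y ltac:(lra)). specialize (P2 y ltac:(lra)). specialize (P3 y ltac:(lra)).
  apply abs_lt_inv in P1; apply abs_lt_inv in P2; apply abs_lt_inv in P3.
  assert (Hyx : Rabs (y - x) < Rmin x (1 - x)) by lra. apply abs_lt_inv in Hyx.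
  split. unfold I01; lra. unfold e in *. lra.
Qed.

Lemma h_cpt x : 0 < x < 1 -> continuity_pt h x.
Proof. intros Hx. apply cpt_of_ed. apply conv_cont; auto. apply hconv. Qed.

Lemma Iphi_cpt (F : R -> R) (HF : inF F) x : 0 < x < 1 -> continuity_pt (Iphi F) x.
Proof. intros Hx. apply cpt_of_ed. apply Iphi_ed; auto. Qed.

Lemma slack_min p q : 0 < p -> p <= q -> q < 1 -> (forall y, p <= y <= q -> U y) ->
  exists s, 0 < s /\ forall y, p <= y <= q -> s <= h y - Iphi f y /\ s <= Iphi g y - h y.
Proof.
  intros Hp Hpq Hq HU.
  destruct (continuity_ab_min (fun y => h y - Iphi f y) p q Hpq) as [y1 [Hy1 Hy1']].
  { intros c Hc. apply continuity_pt_minus. apply h_cpt; lra. apply Iphi_cpt; auto; lra. }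
  destruct (continuity_ab_min (fun y => Iphi g y - h y) p q Hpq) as [y2 [Hy2 Hy2']].
  { intros c Hc. apply continuity_pt_minus. apply Iphi_cpt; auto; lra. apply h_cpt; lra. }
  destruct (HU y1 Hy1') as [_ [A1 _]]. destruct (HU y2 Hy2') as [_ [_ A2]].
  exists (Rmin (h y1 - Iphi f y1) (Iphi g y2 - h y2)). split. apply Rmin_pos; lra.
  intros y Hy. specialize (Hy1 y Hy). specialize (Hy2 y Hy). simpl in *.
  pose proof (Rmin_l (h y1 - Iphi f y1) (Iphi g y2 - h y2)). pose proof (Rmin_r (h y1 - Iphi f y1) (Iphi g y2 - h y2)).
  lra.
Qed.

Hypothesis Hext : extreme_Ifg f g h.

Lemma perturb_false (psi : R -> R) eps : 0 < eps ->
  convex01 (fun y => h y + eps * psi y) -> convex01 (fun y => h y + (- eps) * psi y) ->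
  (forall y, I01 y -> Iphi f y <= h y + eps * psi y <= Iphi g y) ->
  (forall y, I01 y -> Iphi f y <= h y + (- eps) * psi y <= Iphi g y) ->
  forall x, I01 x -> psi x = 0.
Proof.
  intros He C1 C2 B1 B2 x Hx.
  destruct Hext as [_ E].
  assert (P1 : inIfg f g (fun y => h y + eps * psi y)) by (apply (inIfg_of f g Hf Hg Hmaj); auto).
  assert (P2 : inIfg f g (fun y => h y + (- eps) * psi y)) by (apply (inIfg_of f g Hf Hg Hmaj); auto).
  specialize (E _ _ (1/2) P1 P2 ltac:(lra)).
  assert (Hc : forall y, I01 y -> h y = 1/2 * (h y + eps * psi y) + (1 - 1/2) * (h y + - eps * psi y)) by (intros; field).
  specialize (E Hc x Hx). simpl in E.
  assert (2 * eps * psi x = 0) by lra.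
  apply Rmult_integral in H. destruct H; lra.
Qed.


Lemma coef_pos eps a : 0 < eps -> eps * Rabs a <= 1 -> 0 <= 1 + eps * a /\ 0 <= 1 + - eps * a.
Proof. intros. pose proof (Rle_abs a); pose proof (Rle_abs (-a)); rewrite Rabs_Ropp in *. split; nra. Qed.

Lemma GLfalse t1 t2 t3 t4 m1 m2 m3 m4 a1 a2 a3 eps :
  I01 t1 -> I01 t2 -> I01 t3 -> I01 t4 -> t1 <= t2 -> t2 <= t3 -> t3 <= t4 ->
  m1 <= m2 -> m2 <= m3 -> m3 <= m4 ->
  subdiff h t1 m1 -> subdiff h t2 m2 -> subdiff h t3 m3 -> subdiff h t4 m4 ->
  0 < eps -> eps * Rabs a1 <= 1 -> eps * Rabs a2 <= 1 -> eps * Rabs a3 <= 1 ->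
  (forall y, I01 y -> Iphi f y <= h y - eps * Rabs (psi h t1 t2 t3 t4 m1 m2 m3 m4 a1 a2 a3 y)
                  /\ h y + eps * Rabs (psi h t1 t2 t3 t4 m1 m2 m3 m4 a1 a2 a3 y) <= Iphi g y) ->
  forall x, I01 x -> psi h t1 t2 t3 t4 m1 m2 m3 m4 a1 a2 a3 x = 0.
Proof.
  intros I1 I2 I3 I4 T12 T23 T34 M12 M23 M34 S1 S2 S3 S4 He E1 E2 E3 HB.
  apply (perturb_false _ eps He).
  - apply psi_conv; auto. apply hconv.
    apply (coef_pos eps a1); auto. apply (coef_pos eps a2); auto. apply (coef_pos eps a3); auto.
  - apply psi_conv; auto. apply hconv.
    apply (coef_pos eps a1); auto. apply (coef_pos eps a2); auto. apply (coef_pos eps a3); auto.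
  - intros y Hy. specialize (HB y Hy). pose proof (Rle_abs (psi h t1 t2 t3 t4 m1 m2 m3 m4 a1 a2 a3 y)).
    pose proof (Rle_abs (- psi h t1 t2 t3 t4 m1 m2 m3 m4 a1 a2 a3 y)). rewrite Rabs_Ropp in *. nra.
  - intros y Hy. specialize (HB y Hy). pose proof (Rle_abs (psi h t1 t2 t3 t4 m1 m2 m3 m4 a1 a2 a3 y)).
    pose proof (Rle_abs (- psi h t1 t2 t3 t4 m1 m2 m3 m4 a1 a2 a3 y)). rewrite Rabs_Ropp in *. nra.
Qed.


Definition AF u v := forall w, u <= w <= v -> (v - u) * h w = (v - w) * h u + (w - u) * h v.

Lemma NA_wit u v : 0 <= u -> u < v -> v <= 1 -> ~ AF u v ->
  exists w, u < w < v /\ (v - u) * h w < (v - w) * h u + (w - u) * h v.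
Proof.
  intros Hu Huv Hv HN. apply NNPP. intros Hc. apply HN. intros w Hw.
  destruct (Req_dec w u) as [->|Hwu]. ring. destruct (Req_dec w v) as [->|Hwv]. ring.
  pose proof (conv3 h u w v hconv Hu ltac:(lra) ltac:(lra) Hv).
  destruct (Rle_lt_or_eq_dec _ _ H) as [Hl|Heq]; auto.
  exfalso. apply Hc. exists w. split; [lra|auto].
Qed.

Lemma e_pos ti tj m : 0 <= ti -> ti < tj -> tj <= 1 -> subdiff h ti m -> ~ AF ti tj ->
  0 < h tj - ln h ti m tj.
Proof.
  intros H0 H1 H2 Hm HN. destruct (NA_wit ti tj H0 H1 H2 HN) as [w [Hw Hlt]].
  pose proof (Hm w ltac:(unfold I01; lra)). pose proof (Hm tj ltac:(unfold I01; lra)).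
  unfold ln. destruct (Rle_lt_or_eq_dec 0 (h tj - (h ti + m * (tj - ti)))) as [|E]. lra. lra.
  exfalso. assert (Ej : h tj = h ti + m * (tj - ti)) by lra. rewrite Ej in Hlt. nra.
Qed.

Lemma slope_lt ti tj m m' : I01 ti -> I01 tj -> ti < tj -> subdiff h ti m -> subdiff h tj m' ->
  0 < h tj - ln h ti m tj -> m < m'.
Proof.
  intros I1 I2 Hlt S1 S2 He. pose proof (S2 ti I1). unfold ln in He.
  assert ((m' - m) * (tj - ti) > 0) by lra. nra.
Qed.

Lemma ln_diff ta ma tb mb : mb - ma <> 0 -> forall y,
  ln h tb mb y - ln h ta ma y = (mb - ma) * (y - (tb - (h tb - ln h ta ma tb) / (mb - ma))).
Proof. intros H y. unfold ln. field. auto. Qed.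

Lemma z_ge ta ma tb mb : I01 ta -> I01 tb -> subdiff h tb mb -> ma < mb ->
  ta <= tb - (h tb - ln h ta ma tb) / (mb - ma).
Proof.
  intros Ia Ib Sb Hm. pose proof (Sb ta Ia). unfold ln.
  apply (Rmult_le_reg_l (mb - ma)). lra.
  replace ((mb - ma) * (tb - (h tb - (h ta + ma * (tb - ta))) / (mb - ma))) with
     ((mb - ma) * tb - (h tb - (h ta + ma * (tb - ta)))) by (field; lra). nra.
Qed.

Lemma z_lt ta ma tb mb : ma < mb -> 0 < h tb - ln h ta ma tb ->
  tb - (h tb - ln h ta ma tb) / (mb - ma) < tb.
Proof. intros H1 H2. assert (0 < (h tb - ln h ta ma tb) / (mb - ma)) by (apply Rdiv_lt_0_compat; lra). lra. Qed.

Lemma Kseg_cases t m t' m' y : Kseg h t m t' m' y = ln h t m y \/ Kseg h t m t' m' y = h y \/ Kseg h t m t' m' y = ln h t' m' y.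
Proof. unfold Kseg. destruct (Rle_dec y t); auto. destruct (Rle_dec y t'); auto. Qed.

Lemma psi_bnd t1 t2 t3 t4 m1 m2 m3 m4 a1 a2 a3 y C :
  Rabs (h y) <= C -> Rabs (ln h t1 m1 y) <= C -> Rabs (ln h t2 m2 y) <= C ->
  Rabs (ln h t3 m3 y) <= C -> Rabs (ln h t4 m4 y) <= C ->
  Rabs (psi h t1 t2 t3 t4 m1 m2 m3 m4 a1 a2 a3 y) <= 2 * C * (Rabs a1 + Rabs a2 + Rabs a3).
Proof.
  intros B0 B1 B2 B3 B4. unfold psi.
  assert (G : forall K l, (K = ln h t1 m1 y \/ K = h y \/ K = ln h t2 m2 y \/ K = ln h t3 m3 y \/ K = ln h t4 m4 y) ->
     Rabs l <= C -> Rabs (K - l) <= 2 * C).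
  { intros K l HK Hl. unfold Rminus. eapply Rle_trans. apply Rabs_triang. rewrite Rabs_Ropp.
    destruct HK as [ E | [ E | [ E | [ E | E ] ] ] ]; rewrite E; lra. }
  assert (Q1 : Rabs (Kseg h t1 m1 t2 m2 y - ln h t1 m1 y) <= 2 * C).
  { apply G; auto. destruct (Kseg_cases t1 m1 t2 m2 y) as [E|[E|E]]; rewrite E; auto 6. }
  assert (Q2 : Rabs (Kseg h t2 m2 t3 m3 y - ln h t2 m2 y) <= 2 * C).
  { apply G; auto. destruct (Kseg_cases t2 m2 t3 m3 y) as [E|[E|E]]; rewrite E; auto 6. }
  assert (Q3 : Rabs (Kseg h t3 m3 t4 m4 y - ln h t3 m3 y) <= 2 * C).
  { apply G; auto. destruct (Kseg_cases t3 m3 t4 m4 y) as [E|[E|E]]; rewrite E; auto 6. }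
  eapply Rle_trans. apply Rabs_triang. eapply Rle_trans. apply Rplus_le_compat_r. apply Rabs_triang.
  rewrite !Rabs_mult.
  pose proof (Rabs_pos a1); pose proof (Rabs_pos a2); pose proof (Rabs_pos a3).
  assert (Rabs a1 * Rabs (Kseg h t1 m1 t2 m2 y - ln h t1 m1 y) <= Rabs a1 * (2 * C)) by (apply Rmult_le_compat_l; auto).
  assert (Rabs a2 * Rabs (Kseg h t2 m2 t3 m3 y - ln h t2 m2 y) <= Rabs a2 * (2 * C)) by (apply Rmult_le_compat_l; auto).
  assert (Rabs a3 * Rabs (Kseg h t3 m3 t4 m4 y - ln h t3 m3 y) <= Rabs a3 * (2 * C)) by (apply Rmult_le_compat_l; auto).
  lra.
Qed.

Lemma ln_bnd t m y : I01 t -> I01 y -> Rabs (ln h t m y) <= Rabs (h t) + Rabs m.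
Proof.
  intros [It It'] [Iy Iy']. unfold ln. eapply Rle_trans. apply Rabs_triang. rewrite Rabs_mult.
  assert (Rabs (y - t) <= 1) by (apply Rabs_le; lra).
  pose proof (Rabs_pos m). assert (Rabs m * Rabs (y - t) <= Rabs m * 1) by (apply Rmult_le_compat_l; auto). lra.
Qed.

Lemma h_bnd t1 t4 m1 y : I01 t1 -> I01 t4 -> t1 <= y <= t4 -> subdiff h t1 m1 ->
  Rabs (h y) <= Rabs (h t1) + Rabs (h t4) + Rabs m1.
Proof.
  intros I1 I4 Hy S1. assert (Iy : I01 y) by (destruct I1, I4; unfold I01; lra).
  pose proof (S1 y Iy). pose proof (ln_bnd t1 m1 y I1 Iy) as L. unfold ln in L. apply abs_le_inv in L.
  pose proof (Rle_abs (h t1)); pose proof (Rle_abs (h t4)); pose proof (Rabs_pos m1); pose proof (Rabs_pos (h t4)).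
  apply Rabs_le. split. lra.
  destruct (Req_dec y t1) as [->|Hy1]. lra. destruct (Req_dec y t4) as [->|Hy4]. lra.
  pose proof (conv3 h t1 y t4 hconv ltac:(destruct I1; lra) ltac:(lra) ltac:(lra) ltac:(destruct I4; lra)).
  apply (Rmult_le_reg_l (t4 - t1)). lra. nra.
Qed.

Lemma four_pts t1 t2 t3 t4 : 0 < t1 -> t1 < t2 -> t2 < t3 -> t3 < t4 -> t4 < 1 ->
  (forall y, t1 <= y <= t4 -> U y) -> ~ AF t1 t2 -> ~ AF t2 t3 -> ~ AF t3 t4 -> False.
Proof.
  intros P1 P12 P23 P34 P4 HU N1 N2 N3.
  assert (I1 : I01 t1) by (unfold I01; lra). assert (I2 : I01 t2) by (unfold I01; lra).
  assert (I3 : I01 t3) by (unfold I01; lra). assert (I4 : I01 t4) by (unfold I01; lra).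
  destruct (subdiff_exists h t1 hconv ltac:(lra)) as [m1 S1].
  destruct (subdiff_exists h t2 hconv ltac:(lra)) as [m2 S2].
  destruct (subdiff_exists h t3 hconv ltac:(lra)) as [m3 S3].
  destruct (subdiff_exists h t4 hconv ltac:(lra)) as [m4 S4].
  pose proof (e_pos t1 t2 m1 ltac:(lra) P12 ltac:(lra) S1 N1) as E1.
  pose proof (e_pos t2 t3 m2 ltac:(lra) P23 ltac:(lra) S2 N2) as E2.
  pose proof (e_pos t3 t4 m3 ltac:(lra) P34 ltac:(lra) S3 N3) as E3.
  pose proof (slope_lt t1 t2 m1 m2 I1 I2 P12 S1 S2 E1) as M12.
  pose proof (slope_lt t2 t3 m2 m3 I2 I3 P23 S2 S3 E2) as M23.
  pose proof (slope_lt t3 t4 m3 m4 I3 I4 P34 S3 S4 E3) as M34.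
  pose proof (z_lt t1 m1 t2 m2 M12 E1) as Z1. pose proof (z_lt t2 m2 t3 m3 M23 E2) as Z2.
  pose proof (z_ge t2 m2 t3 m3 I2 I3 S3 M23) as Z2'. pose proof (z_ge t3 m3 t4 m4 I3 I4 S4 M34) as Z3'.
  set (z1 := t2 - (h t2 - ln h t1 m1 t2) / (m2 - m1)) in *.
  set (z2 := t3 - (h t3 - ln h t2 m2 t3) / (m3 - m2)) in *.
  set (z3 := t4 - (h t4 - ln h t3 m3 t4) / (m4 - m3)) in *.
  set (a1 := (z3 - z2) / (m2 - m1)). set (a2 := (z1 - z3) / (m3 - m2)). set (a3 := (z2 - z1) / (m4 - m3)).
  assert (Hal : forall y, a1 * (ln h t2 m2 y - ln h t1 m1 y) + a2 * (ln h t3 m3 y - ln h t2 m2 y)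
     + a3 * (ln h t4 m4 y - ln h t3 m3 y) = 0).
  { intros y. rewrite (ln_diff t1 m1 t2 m2), (ln_diff t2 m2 t3 m3), (ln_diff t3 m3 t4 m4) by lra.
    fold z1 z2 z3. unfold a1, a2, a3. apply alpha_sol; lra. }
  assert (A1 : a1 <> 0) by (unfold a1; unfold Rdiv; apply Rmult_integral_contrapositive_currified; [lra|apply Rinv_neq_0_compat; lra]).
  set (C := Rabs (h t1) + Rabs (h t4) + Rabs m1 + (Rabs (h t2) + Rabs m2) + (Rabs (h t3) + Rabs m3) + (Rabs (h t4) + Rabs m4) + (Rabs (h t1) + Rabs m1)).
  assert (Hpos : forall z, 0 <= Rabs z) by apply Rabs_pos.
  assert (HC : 0 <= C).
  { unfold C. pose proof (Hpos (h t1)); pose proof (Hpos (h t2)); pose proof (Hpos (h t3)); pose proof (Hpos (h t4));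
      pose proof (Hpos m1); pose proof (Hpos m2); pose proof (Hpos m3); pose proof (Hpos m4). lra. }
  assert (HA0 : 0 <= Rabs a1 + Rabs a2 + Rabs a3) by (pose proof (Hpos a1); pose proof (Hpos a2); pose proof (Hpos a3); lra).
  assert (HCA : 0 <= 2 * C * (Rabs a1 + Rabs a2 + Rabs a3)) by (apply Rmult_le_pos; lra).
  assert (Bp : forall y, I01 y -> Rabs (psi h t1 t2 t3 t4 m1 m2 m3 m4 a1 a2 a3 y) <= 2 * C * (Rabs a1 + Rabs a2 + Rabs a3)).
  { intros y Hy. destruct (Rlt_or_le y t1) as [Hlt|Hge].
    { rewrite psi_left by lra. rewrite Rabs_R0. lra. }
    destruct (Rlt_or_le t4 y) as [Hgt|Hle].
    { rewrite psi_right; auto; try lra. rewrite Rabs_R0. lra. }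
    pose proof (h_bnd t1 t4 m1 y I1 I4 ltac:(lra) S1).
    pose proof (ln_bnd t1 m1 y I1 Hy). pose proof (ln_bnd t2 m2 y I2 Hy).
    pose proof (ln_bnd t3 m3 y I3 Hy). pose proof (ln_bnd t4 m4 y I4 Hy).
    apply psi_bnd; unfold C;
    pose proof (Hpos (h t1)); pose proof (Hpos (h t2)); pose proof (Hpos (h t3)); pose proof (Hpos (h t4));
      pose proof (Hpos m1); pose proof (Hpos m2); pose proof (Hpos m3); pose proof (Hpos m4); lra. }
  destruct (slack_min t1 t4 P1 ltac:(lra) P4 HU) as [s [Hs Hsl]].
  set (Ba := Rabs a1 + Rabs a2 + Rabs a3 + 1).
  set (B := 2 * C * (Rabs a1 + Rabs a2 + Rabs a3) + 1).
  assert (HBa : 0 < Ba) by (unfold Ba; lra).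
  assert (HB : 0 < B) by (unfold B; lra).
  set (eps := Rmin (s / B) (1 / Ba)).
  assert (Heps : 0 < eps) by (unfold eps; apply Rmin_pos; apply Rdiv_lt_0_compat; lra).
  assert (Ea : forall a, Rabs a <= Ba - 1 -> eps * Rabs a <= 1).
  { intros a Ha. assert (eps <= 1 / Ba) by apply Rmin_r.
    apply Rle_trans with (1 / Ba * Ba). pose proof (Hpos a). nra. right; field; lra. }
  assert (Ebs : eps * B <= s).
  { assert (eps <= s / B) by apply Rmin_l. apply Rle_trans with (s / B * B). nra. right; field; lra. }
  pose proof (GLfalse t1 t2 t3 t4 m1 m2 m3 m4 a1 a2 a3 eps I1 I2 I3 I4 ltac:(lra) ltac:(lra) ltac:(lra)
     ltac:(lra) ltac:(lra) ltac:(lra) S1 S2 S3 S4 Heps) as G.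
  assert (Ht2 : psi h t1 t2 t3 t4 m1 m2 m3 m4 a1 a2 a3 t2 = 0).
  { apply G; auto.
    - apply Ea. unfold Ba; pose proof (Hpos a2); pose proof (Hpos a3); lra.
    - apply Ea. unfold Ba; pose proof (Hpos a1); pose proof (Hpos a3); lra.
    - apply Ea. unfold Ba; pose proof (Hpos a1); pose proof (Hpos a2); lra.
    - intros y Hy. pose proof (hbounds y Hy).
      destruct (Rlt_or_le y t1) as [Hlt|Hge].
      { rewrite psi_left by lra. rewrite Rabs_R0. lra. }
      destruct (Rlt_or_le t4 y) as [Hgt|Hle].
      { rewrite psi_right; auto; try lra. rewrite Rabs_R0. lra. }
      specialize (Hsl y (conj Hge Hle)). specialize (Bp y Hy).
      assert (eps * Rabs (psi h t1 t2 t3 t4 m1 m2 m3 m4 a1 a2 a3 y) <= eps * B).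
      { apply Rmult_le_compat_l; unfold B in *; lra. }
      lra. }
  rewrite psi_12 in Ht2 by lra. apply Rmult_integral in Ht2. lra.
Qed.

Lemma shrinkR x v : 0 < x -> x < v -> v < 1 -> ~ AF x v -> exists u, x < u < v /\ ~ AF u v.
Proof.
  intros H0 Hxv Hv HN. destruct (NA_wit x v ltac:(lra) Hxv ltac:(lra) HN) as [w [Hw Hlt]].
  set (gap := (v - w) * h x + (w - x) * h v - (v - x) * h w).
  assert (Hgap : 0 < gap) by (unfold gap; lra).
  destruct (conv_cont h x hconv ltac:(lra) (gap / (4 * (v - w))) ltac:(apply Rdiv_lt_0_compat; lra)) as [d [Hd Hc]].
  set (M := Rabs (h v - h w) + 1).
  assert (HM : 0 < M) by (unfold M; pose proof (Rabs_pos (h v - h w)); lra).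
  set (r := Rmin (Rmin (d / 2) ((w - x) / 2)) (gap / (4 * M))).
  assert (Hu1 : 0 < r) by (unfold r; repeat apply Rmin_pos; try apply Rdiv_lt_0_compat; lra).
  assert (Hu2 : r <= d / 2) by (unfold r; eapply Rle_trans; [apply Rmin_l|apply Rmin_l]).
  assert (Hu3 : r <= (w - x) / 2) by (unfold r; eapply Rle_trans; [apply Rmin_l|apply Rmin_r]).
  assert (Hu4 : r <= gap / (4 * M)) by (unfold r; apply Rmin_r).
  exists (x + r). split. lra.
  specialize (Hc (x + r) ltac:(replace (x + r - x) with r by ring; rewrite Rabs_right; lra)). apply abs_lt_inv in Hc.
  intros HA. specialize (HA w ltac:(lra)).
  assert (K2 : r * Rabs (h v - h w) <= gap / 4).
  { apply Rle_trans with (r * M). apply Rmult_le_compat_l. lra. unfold M; lra.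
    apply Rle_trans with (gap / (4 * M) * M). apply Rmult_le_compat_r; lra. right; field; lra. }
  assert (K1 : (v - w) * (h (x + r) - h x) >= - (gap / 4)).
  { assert ((v - w) * (gap / (4 * (v - w))) = gap / 4) by (field; lra). nra. }
  pose proof (Rle_abs (h v - h w)).
  assert (K3 : r * (h v - h w) <= gap / 4) by nra.
  assert (D : (v - w) * h (x + r) + (w - (x + r)) * h v - (v - (x + r)) * h w >= gap / 2).
  { unfold gap in *. nra. }
  lra.
Qed.

Lemma shrinkL u x : 0 < u -> u < x -> x < 1 -> ~ AF u x -> exists v, u < v < x /\ ~ AF u v.
Proof.
  intros H0 Hux Hx HN. destruct (NA_wit u x ltac:(lra) Hux ltac:(lra) HN) as [w [Hw Hlt]].
  set (gap := (x - w) * h u + (w - u) * h x - (x - u) * h w).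
  assert (Hgap : 0 < gap) by (unfold gap; lra).
  destruct (conv_cont h x hconv ltac:(lra) (gap / (4 * (w - u))) ltac:(apply Rdiv_lt_0_compat; lra)) as [d [Hd Hc]].
  set (M := Rabs (h u - h w) + 1).
  assert (HM : 0 < M) by (unfold M; pose proof (Rabs_pos (h u - h w)); lra).
  set (r := Rmin (Rmin (d / 2) ((x - w) / 2)) (gap / (4 * M))).
  assert (Hu1 : 0 < r) by (unfold r; repeat apply Rmin_pos; try apply Rdiv_lt_0_compat; lra).
  assert (Hu2 : r <= d / 2) by (unfold r; eapply Rle_trans; [apply Rmin_l|apply Rmin_l]).
  assert (Hu3 : r <= (x - w) / 2) by (unfold r; eapply Rle_trans; [apply Rmin_l|apply Rmin_r]).
  assert (Hu4 : r <= gap / (4 * M)) by (unfold r; apply Rmin_r).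
  exists (x - r). split. lra.
  specialize (Hc (x - r) ltac:(replace (x - r - x) with (- r) by ring; rewrite Rabs_Ropp, Rabs_right; lra)). apply abs_lt_inv in Hc.
  intros HA. specialize (HA w ltac:(lra)).
  assert (K2 : r * Rabs (h u - h w) <= gap / 4).
  { apply Rle_trans with (r * M). apply Rmult_le_compat_l. lra. unfold M; lra.
    apply Rle_trans with (gap / (4 * M) * M). apply Rmult_le_compat_r; lra. right; field; lra. }
  assert (K1 : (w - u) * (h (x - r) - h x) >= - (gap / 4)).
  { assert ((w - u) * (gap / (4 * (w - u))) = gap / 4) by (field; lra). nra. }
  pose proof (Rle_abs (h u - h w)).
  assert (K3 : r * (h u - h w) <= gap / 4) by nra.
  assert (D : ((x - r) - w) * h u + (w - u) * h (x - r) - ((x - r) - u) * h w >= gap / 2).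
  { unfold gap in *. nra. }
  lra.
Qed.

Lemma L1R x : U x -> exists d, 0 < d /\ AF x (x + d).
Proof.
  intros HU. pose proof (U_int x HU) as Hx. destruct (U_open x HU) as [eta [Heta HO]].
  apply NNPP. intros Hn.
  assert (Hn' : forall d, 0 < d -> ~ AF x (x + d)) by (intros d Hd HA; apply Hn; exists d; auto).
  pose proof (Rmin_r eta (1-x)). pose proof (Rmin_l eta (1-x)). pose proof (Rmin_pos eta (1-x) Heta ltac:(lra)).
  set (t4 := x + Rmin eta (1 - x) / 2).
  assert (Ht4 : x < t4 < 1) by (unfold t4; lra).
  assert (HU4 : forall y, x <= y <= t4 -> U y).
  { intros y Hy. apply HO. unfold t4 in Hy. apply Rabs_def1; lra. }
  assert (N4 : ~ AF x t4) by (replace t4 with (x + (t4 - x)) by ring; apply Hn'; lra).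
  destruct (shrinkR x t4 ltac:(lra) ltac:(lra) ltac:(lra) N4) as [t3 [H3 N34]].
  assert (N3 : ~ AF x t3) by (replace t3 with (x + (t3 - x)) by ring; apply Hn'; lra).
  destruct (shrinkR x t3 ltac:(lra) ltac:(lra) ltac:(lra) N3) as [t2 [H2 N23]].
  assert (N2 : ~ AF x t2) by (replace t2 with (x + (t2 - x)) by ring; apply Hn'; lra).
  apply (four_pts x t2 t3 t4); auto; lra.
Qed.

Lemma L1L x : U x -> exists d, 0 < d /\ AF (x - d) x.
Proof.
  intros HU. pose proof (U_int x HU) as Hx. destruct (U_open x HU) as [eta [Heta HO]].
  apply NNPP. intros Hn.
  assert (Hn' : forall d, 0 < d -> ~ AF (x - d) x) by (intros d Hd HA; apply Hn; exists d; auto).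
  pose proof (Rmin_r eta x). pose proof (Rmin_l eta x). pose proof (Rmin_pos eta x Heta ltac:(lra)).
  set (t1 := x - Rmin eta x / 2).
  assert (Ht1 : 0 < t1 < x) by (unfold t1; lra).
  assert (HU1 : forall y, t1 <= y <= x -> U y).
  { intros y Hy. apply HO. unfold t1 in Hy. apply Rabs_def1; lra. }
  assert (N1 : ~ AF t1 x) by (replace t1 with (x - (x - t1)) by ring; apply Hn'; lra).
  destruct (shrinkL t1 x ltac:(lra) ltac:(lra) ltac:(lra) N1) as [t2 [H2 N12]].
  assert (N2 : ~ AF t2 x) by (replace t2 with (x - (x - t2)) by ring; apply Hn'; lra).
  destruct (shrinkL t2 x ltac:(lra) ltac:(lra) ltac:(lra) N2) as [t3 [H3 N23]].
  assert (N3 : ~ AF t3 x) by (replace t3 with (x - (x - t3)) by ring; apply Hn'; lra).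
  apply (four_pts t1 t2 t3 x); auto; lra.
Qed.

Definition LN c d al be := forall z, c <= z <= d -> h z = al + be * z.

Lemma seg_below c d al be : 0 <= c -> c < d -> d <= 1 -> LN c d al be ->
  forall y, I01 y -> al + be * y <= h y.
Proof.
  intros Hc Hcd Hd HL y [Hy0 Hy1].
  destruct (Rle_or_lt y c) as [Hyc|Hyc].
  - destruct (Req_dec y c) as [->|Hne]. rewrite HL; lra.
    pose proof (conv3 h y c d hconv Hy0 ltac:(lra) Hcd Hd).
    rewrite (HL c), (HL d) in H by lra. nra.
  - destruct (Rle_or_lt y d) as [Hyd|Hyd].
    + rewrite HL; lra.
    + pose proof (conv3 h c d y hconv Hc Hcd Hyd Hy1).
      rewrite (HL c), (HL d) in H by lra. nra.
Qed.

Lemma seg_subdiff c d al be x : 0 <= c -> c < d -> d <= 1 -> LN c d al be -> c <= x <= d ->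
  subdiff h x be.
Proof.
  intros Hc Hcd Hd HL Hx y Hy. rewrite (HL x Hx). pose proof (seg_below c d al be Hc Hcd Hd HL y Hy). lra.
Qed.

Lemma tangent c d al be x : 0 <= c -> c < d -> d <= 1 -> LN c d al be -> 0 < x < 1 ->
  c <= x <= d -> h x = Iphi g x -> be = g x.
Proof.
  intros Hc Hcd Hd HL Hx Hxcd HG.
  assert (Key : forall e, 0 < e -> be <= g x + e /\ g x - e <= be).
  { intros e He. destruct (Ig_approx g Hg Hgc x e ltac:(unfold I01; lra) He) as [del [Hdel Ha]].
    set (r := Rmin (del / 2) (Rmin (x / 2) ((1 - x) / 2))).
    assert (Hr : 0 < r) by (unfold r; repeat apply Rmin_pos; lra).
    assert (Hr1 : r <= del / 2) by apply Rmin_l.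
    assert (Hr2 : r <= x / 2) by (eapply Rle_trans; [apply Rmin_r|apply Rmin_l]).
    assert (Hr3 : r <= (1 - x) / 2) by (eapply Rle_trans; [apply Rmin_r|apply Rmin_r]).
    assert (Ip : I01 (x + r)) by (unfold I01; lra). assert (Im : I01 (x - r)) by (unfold I01; lra).
    pose proof (Ha (x + r) Ip ltac:(replace (x + r - x) with r by ring; rewrite Rabs_right; lra)) as A1.
    pose proof (Ha (x - r) Im ltac:(replace (x - r - x) with (- r) by ring; rewrite Rabs_Ropp, Rabs_right; lra)) as A2.
    replace (x + r - x) with r in A1 by ring. replace (x - r - x) with (- r) in A2 by ring.
    rewrite Rabs_Ropp in A2. rewrite (Rabs_right r) in A1, A2 by lra.
    apply abs_le_inv in A1. apply abs_le_inv in A2.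
    pose proof (seg_below c d al be Hc Hcd Hd HL (x + r) Ip).
    pose proof (seg_below c d al be Hc Hcd Hd HL (x - r) Im).
    pose proof (hbounds (x + r) Ip). pose proof (hbounds (x - r) Im).
    rewrite (HL x Hxcd) in HG.
    split; apply (Rmult_le_reg_l r); auto; nra. }
  apply Rle_antisym.
  - apply le_epsilon. intros e He. destruct (Key e He); lra.
  - apply le_epsilon. intros e He. destruct (Key e He); lra.
Qed.

Lemma tangent_conda c d al be x : 0 <= c -> c < d -> d <= 1 -> LN c d al be -> 0 < x < 1 ->
  (x = c \/ x = d) -> h x = Iphi g x -> cond_a h (Iphi g) c d.
Proof.
  intros Hc Hcd Hd HL Hx Hxe HG.
  assert (Hxcd : c <= x <= d) by (destruct Hxe; subst; lra).
  pose proof (tangent c d al be x Hc Hcd Hd HL Hx Hxcd HG) as Hbe.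
  exists x. split; auto. exists (g x). split. apply Ig_deriv; auto. unfold I01; lra.
  intros z Hz. rewrite (HL z Hz). rewrite <- HG, (HL x Hxcd), Hbe. ring.
Qed.

Lemma slope0 d al be : 0 < d -> d <= 1 -> LN 0 d al be -> ~ cond_a h (Iphi g) 0 d -> be < g 0.
Proof.
  intros Hd Hd1 HL HN.
  assert (Hal : al = Iphi g 0) by (rewrite <- hg0; rewrite (HL 0) by lra; ring).
  assert (Hle : be <= g 0).
  { apply le_epsilon. intros e He.
    destruct (Ig_approx g Hg Hgc 0 e ltac:(unfold I01; lra) He) as [del [Hdel Ha]].
    set (r := Rmin (del / 2) d). assert (Hr : 0 < r) by (unfold r; apply Rmin_pos; lra).
    assert (Hr1 : r <= del / 2) by apply Rmin_l. assert (Hr2 : r <= d) by apply Rmin_r.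
    assert (Ir : I01 r) by (unfold I01; lra).
    pose proof (Ha r Ir ltac:(rewrite Rminus_0_r, Rabs_right; lra)) as A.
    rewrite Rminus_0_r, (Rabs_right r) in A by lra. apply abs_le_inv in A.
    pose proof (hbounds r Ir). rewrite (HL r) in H by lra.
    apply (Rmult_le_reg_l r); auto. nra. }
  destruct (Rle_lt_or_eq_dec _ _ Hle) as [|E]; auto. exfalso. apply HN.
  exists 0. split; auto. exists (g 0). split. apply Ig_deriv; auto. unfold I01; lra.
  intros z Hz. rewrite HL by auto. rewrite Hal, E. ring.
Qed.

Lemma slope1 c al be : 0 <= c -> c < 1 -> LN c 1 al be -> ~ cond_a h (Iphi g) c 1 -> g 1 < be.
Proof.
  intros Hc Hc1 HL HN.
  assert (Hal : al + be = Iphi g 1) by (rewrite <- hg1; rewrite (HL 1) by lra; ring).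
  assert (Hle : g 1 <= be).
  { apply le_epsilon. intros e He.
    destruct (Ig_approx g Hg Hgc 1 e ltac:(unfold I01; lra) He) as [del [Hdel Ha]].
    set (r := Rmin (del / 2) (1 - c)). assert (Hr : 0 < r) by (unfold r; apply Rmin_pos; lra).
    assert (Hr1 : r <= del / 2) by apply Rmin_l. assert (Hr2 : r <= 1 - c) by apply Rmin_r.
    assert (Ir : I01 (1 - r)) by (unfold I01; lra).
    pose proof (Ha (1 - r) Ir ltac:(replace (1 - r - 1) with (- r) by ring; rewrite Rabs_Ropp, Rabs_right; lra)) as A.
    replace (1 - r - 1) with (- r) in A by ring. rewrite Rabs_Ropp, (Rabs_right r) in A by lra. apply abs_le_inv in A.
    pose proof (hbounds (1 - r) Ir). rewrite (HL (1 - r)) in H by lra.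
    apply (Rmult_le_reg_l r); auto. nra. }
  destruct (Rle_lt_or_eq_dec _ _ Hle) as [|E]; auto. exfalso. apply HN.
  exists 1. split; auto. exists (g 1). split. apply Ig_deriv; auto. unfold I01; lra.
  intros z Hz. rewrite HL by auto. rewrite <- Hal, E. ring.
Qed.

Lemma slack_up p q : 0 < p -> p <= q -> q < 1 -> (forall y, p <= y <= q -> h y < Iphi g y) ->
  exists m, 0 < m /\ forall y, p <= y <= q -> m <= Iphi g y - h y.
Proof.
  intros Hp Hpq Hq HU.
  destruct (continuity_ab_min (fun y => Iphi g y - h y) p q Hpq) as [y2 [Hy2 Hy2']].
  { intros c Hc. apply continuity_pt_minus. apply Iphi_cpt; auto; lra. apply h_cpt; lra. }
  specialize (HU y2 Hy2'). exists (Iphi g y2 - h y2). split. lra. intros y Hy. apply (Hy2 y Hy).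
Qed.

Lemma low_left u k al be : 0 <= u -> u < k -> k < 1 -> LN u k al be -> U k ->
  exists kap, 0 < kap /\ forall y, u <= y <= k -> kap * (y - u) <= h y - Iphi f y.
Proof.
  intros Hu Huk Hk HL [_ [HUk _]].
  exists ((h k - Iphi f k) / (k - u)). split. apply Rdiv_lt_0_compat; lra.
  intros y Hy. pose proof (hbounds u ltac:(unfold I01; lra)).
  destruct (Req_dec y u) as [->|Hyu]. lra.
  destruct (Req_dec y k) as [->|Hyk]. right; field; lra.
  pose proof (conv3 (Iphi f) u y k (Iphi_convex f Hf) Hu ltac:(lra) ltac:(lra) ltac:(lra)).
  rewrite (HL u), (HL y), (HL k) in * by lra.
  apply (Rmult_le_reg_l (k - u)). lra.
  replace ((k - u) * ((al + be * k - Iphi f k) / (k - u) * (y - u))) with ((al + be * k - Iphi f k) * (y - u)) by (field; lra).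
  nra.
Qed.

Lemma low_right k w al be : 0 < k -> k < w -> w <= 1 -> LN k w al be -> U k ->
  exists kap, 0 < kap /\ forall y, k <= y <= w -> kap * (w - y) <= h y - Iphi f y.
Proof.
  intros Hk Hkw Hw HL [_ [HUk _]].
  exists ((h k - Iphi f k) / (w - k)). split. apply Rdiv_lt_0_compat; lra.
  intros y Hy. pose proof (hbounds w ltac:(unfold I01; lra)).
  destruct (Req_dec y w) as [->|Hyw]. lra.
  destruct (Req_dec y k) as [->|Hyk]. right; field; lra.
  pose proof (conv3 (Iphi f) k y w (Iphi_convex f Hf) ltac:(lra) ltac:(lra) ltac:(lra) Hw).
  rewrite (HL w), (HL y), (HL k) in * by lra.
  apply (Rmult_le_reg_l (w - k)). lra.
  replace ((w - k) * ((al + be * k - Iphi f k) / (w - k) * (w - y))) with ((al + be * k - Iphi f k) * (w - y)) by (field; lra).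
  nra.
Qed.

Lemma up_left u k al be : 0 <= u -> u < k -> k < 1 -> LN u k al be ->
  (forall y, u < y <= k -> U y) ->
  (u = 0 /\ ~ cond_a h (Iphi g) 0 k) \/ (0 < u /\ h u < Iphi g u) ->
  exists kap, 0 < kap /\ forall y, u <= y <= k -> kap * (y - u) <= Iphi g y - h y.
Proof.
  intros Hu Huk Hk HL HU [[E HN]|[Hu0 Hgu]].
  - subst u. pose proof (slope0 k al be Huk ltac:(lra) HL HN) as Hs.
    exists (g 0 - be). split. lra. intros y Hy.
    assert (Hal : al = Iphi g 0) by (rewrite <- hg0; rewrite (HL 0) by lra; ring).
    pose proof (Iphi_diff g Hg 0 y ltac:(unfold I01; lra) ltac:(unfold I01; lra)).
    pose proof (RInt_lb g Hg 0 y ltac:(lra) ltac:(lra) ltac:(lra)).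
    rewrite (HL y) by lra. lra.
  - destruct (slack_up u k Hu0 ltac:(lra) Hk) as [m [Hm Hmin]].
    { intros y Hy. destruct (Req_dec y u) as [->|]; auto. destruct (HU y ltac:(lra)) as [_ [_ X]]. auto. }
    exists (m / (k - u)). split. apply Rdiv_lt_0_compat; lra.
    intros y Hy. specialize (Hmin y Hy).
    apply Rle_trans with m; auto.
    apply Rle_trans with (m / (k - u) * (k - u)). apply Rmult_le_compat_l. left; apply Rdiv_lt_0_compat; lra. lra.
    right; field; lra.
Qed.

Lemma up_right k w al be : 0 < k -> k < w -> w <= 1 -> LN k w al be ->
  (forall y, k <= y < w -> U y) ->
  (w = 1 /\ ~ cond_a h (Iphi g) k 1) \/ (w < 1 /\ h w < Iphi g w) ->
  exists kap, 0 < kap /\ forall y, k <= y <= w -> kap * (w - y) <= Iphi g y - h y.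
Proof.
  intros Hk Hkw Hw HL HU [[E HN]|[Hw1 Hgw]].
  - subst w. pose proof (slope1 k al be ltac:(lra) Hkw HL HN) as Hs.
    exists (be - g 1). split. lra. intros y Hy.
    assert (Hal : al + be = Iphi g 1) by (rewrite <- hg1; rewrite (HL 1) by lra; ring).
    pose proof (Iphi_diff g Hg y 1 ltac:(unfold I01; lra) ltac:(unfold I01; lra)).
    pose proof (RInt_ub g Hg y 1 ltac:(lra) ltac:(lra) ltac:(lra)).
    rewrite (HL y) by lra. nra.
  - destruct (slack_up k w Hk ltac:(lra) Hw1) as [m [Hm Hmin]].
    { intros y Hy. destruct (Req_dec y w) as [->|]; auto. destruct (HU y ltac:(lra)) as [_ [_ X]]. auto. }
    exists (m / (w - k)). split. apply Rdiv_lt_0_compat; lra.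
    intros y Hy. specialize (Hmin y Hy).
    apply Rle_trans with m; auto.
    apply Rle_trans with (m / (w - k) * (w - k)). apply Rmult_le_compat_l. left; apply Rdiv_lt_0_compat; lra. lra.
    right; field; lra.
Qed.

Lemma tent u k w alL beL alR beR mu mw :
  0 <= u -> u < k -> k < w -> w <= 1 -> LN u k alL beL -> LN k w alR beR -> beL < beR ->
  subdiff h u mu -> mu < beL -> subdiff h w mw -> beR < mw ->
  (exists kap, 0 < kap /\ forall y, u <= y <= k -> kap * (y - u) <= h y - Iphi f y /\ kap * (y - u) <= Iphi g y - h y) ->
  (exists kap, 0 < kap /\ forall y, k <= y <= w -> kap * (w - y) <= h y - Iphi f y /\ kap * (w - y) <= Iphi g y - h y) ->
  False.
Proof.
  intros Hu Huk Hkw Hw HLL HLR Hbe Su Hmu Sw Hmw [kL [HkL SL]] [kR [HkR SR]].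
  assert (Sk1 : subdiff h k beL) by (apply (seg_subdiff u k alL beL); auto; lra).
  assert (Sk2 : subdiff h k beR) by (apply (seg_subdiff k w alR beR); auto; lra).
  assert (Iu : I01 u) by (unfold I01; lra). assert (Ik : I01 k) by (unfold I01; lra).
  assert (Iw : I01 w) by (unfold I01; lra).
  set (a1 := (w - k) / (beL - mu)). set (a2 := (u - w) / (beR - beL)). set (a3 := (k - u) / (mw - beR)).
  assert (D1 : forall y, ln h k beL y - ln h u mu y = (beL - mu) * (y - u)).
  { intros y. unfold ln. rewrite (HLL k), (HLL u) by lra. ring. }
  assert (D2 : forall y, ln h k beR y - ln h k beL y = (beR - beL) * (y - k)).
  { intros y. unfold ln. ring. }
  assert (D3 : forall y, ln h w mw y - ln h k beR y = (mw - beR) * (y - w)).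
  { intros y. unfold ln. rewrite (HLR k), (HLR w) by lra. ring. }
  assert (Hal : forall y, a1 * (ln h k beL y - ln h u mu y) + a2 * (ln h k beR y - ln h k beL y)
     + a3 * (ln h w mw y - ln h k beR y) = 0).
  { intros y. rewrite D1, D2, D3. unfold a1, a2, a3. apply alpha_sol; lra. }
  assert (P12 : forall y, u <= y <= k -> psi h u k k w mu beL beR mw a1 a2 a3 y = (w - k) * (y - u)).
  { intros y Hy. rewrite psi_12 by lra. unfold ln. rewrite (HLL y), (HLL u) by lra. unfold a1. field. lra. }
  assert (P34 : forall y, k < y <= w -> psi h u k k w mu beL beR mw a1 a2 a3 y = (k - u) * (w - y)).
  { intros y Hy. rewrite psi_34; auto; try lra. unfold ln. rewrite (HLR y), (HLR w) by lra. unfold a3. field. lra. }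
  set (Ba := Rabs a1 + Rabs a2 + Rabs a3 + 1).
  assert (Hpos : forall z, 0 <= Rabs z) by apply Rabs_pos.
  assert (HBa : 0 < Ba) by (unfold Ba; pose proof (Hpos a1); pose proof (Hpos a2); pose proof (Hpos a3); lra).
  set (eps := Rmin (Rmin (kL / (w - k)) (kR / (k - u))) (1 / Ba)).
  assert (Heps : 0 < eps) by (unfold eps; repeat apply Rmin_pos; apply Rdiv_lt_0_compat; lra).
  assert (E1 : eps <= kL / (w - k)) by (unfold eps; eapply Rle_trans; [apply Rmin_l|apply Rmin_l]).
  assert (E2 : eps <= kR / (k - u)) by (unfold eps; eapply Rle_trans; [apply Rmin_l|apply Rmin_r]).
  assert (E3 : eps <= 1 / Ba) by (unfold eps; apply Rmin_r).
  assert (Ea : forall a, Rabs a <= Ba - 1 -> eps * Rabs a <= 1).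
  { intros a Ha. apply Rle_trans with (1 / Ba * Ba). pose proof (Hpos a). nra. right; field; lra. }
  assert (E1' : eps * (w - k) <= kL).
  { apply Rle_trans with (kL / (w - k) * (w - k)). apply Rmult_le_compat_r; lra. right; field; lra. }
  assert (E2' : eps * (k - u) <= kR).
  { apply Rle_trans with (kR / (k - u) * (k - u)). apply Rmult_le_compat_r; lra. right; field; lra. }
  assert (G : psi h u k k w mu beL beR mw a1 a2 a3 k = 0).
  { apply (GLfalse u k k w mu beL beR mw a1 a2 a3 eps); auto; try lra.
    - apply Ea. unfold Ba; pose proof (Hpos a2); pose proof (Hpos a3); lra.
    - apply Ea. unfold Ba; pose proof (Hpos a1); pose proof (Hpos a3); lra.
    - apply Ea. unfold Ba; pose proof (Hpos a1); pose proof (Hpos a2); lra.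
    - intros y Hy. pose proof (hbounds y Hy).
      destruct (Rlt_or_le y u) as [Hlt|Hge].
      { rewrite psi_left by lra. rewrite Rabs_R0. lra. }
      destruct (Rlt_or_le w y) as [Hgt|Hle].
      { rewrite psi_right; auto; try lra. rewrite Rabs_R0. lra. }
      destruct (Rle_or_lt y k) as [Hyk|Hyk].
      + rewrite P12 by lra. rewrite Rabs_right by nra. destruct (SL y ltac:(lra)).
        assert (eps * ((w - k) * (y - u)) <= kL * (y - u)) by nra. lra.
      + rewrite P34 by lra. rewrite Rabs_right by nra. destruct (SR y ltac:(lra)).
        assert (eps * ((k - u) * (w - y)) <= kR * (w - y)) by nra. lra. }
  rewrite P12 in G by lra. nra.
Qed.

Lemma AF_LN u v : u < v -> AF u v -> LN u v (h u - (h v - h u) / (v - u) * u) ((h v - h u) / (v - u)).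
Proof.
  intros Huv HA z Hz. specialize (HA z Hz).
  apply (Rmult_eq_reg_l (v - u)); [|lra]. rewrite HA. field. lra.
Qed.

Lemma not_U x : I01 x -> ~ U x -> h x = Iphi f x \/ h x = Iphi g x.
Proof.
  intros Hx HN. pose proof (hbounds x Hx).
  destruct (Req_dec (h x) (Iphi f x)); auto. destruct (Req_dec (h x) (Iphi g x)); auto.
  exfalso. apply HN. split; auto. lra.
Qed.

Lemma outer_left u k al be : 0 <= u -> u < k -> U k -> LN u k al be ->
  (forall y, u < y < k -> U y) ->
  (U u -> forall eta, 0 < eta -> exists z, u - eta < z < u /\ h z <> al + be * z) ->
  ~ cond_a h (Iphi g) u k ->
  (exists mu, mu < be /\ subdiff h u mu) /\
  (exists kap, 0 < kap /\ forall y, u <= y <= k -> kap * (y - u) <= h y - Iphi f y /\ kap * (y - u) <= Iphi g y - h y).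
Proof.
  intros Hu Huk HUk HL HUin Hmax HN.
  pose proof (U_int k HUk) as Hk.
  assert (HUin' : forall y, u < y <= k -> U y).
  { intros y Hy. destruct (Req_dec y k) as [->|]; auto. apply HUin; lra. }
  split.
  - destruct (classic (U u)) as [HUu|HUu].
    + pose proof (U_int u HUu) as Hu'.
      destruct (L1L u HUu) as [d [Hd HA]].
      set (d' := Rmin d u).
      assert (Hd' : 0 < d') by (unfold d'; apply Rmin_pos; lra).
      assert (Hd'd : d' <= d) by apply Rmin_l.
      assert (Hd'u : d' <= u) by apply Rmin_r.
      pose proof (AF_LN (u - d) u ltac:(lra) HA) as L0.
      set (nu := (h u - h (u - d)) / (u - (u - d))) in L0.
      assert (L : LN (u - d') u (h (u - d) - nu * (u - d)) nu).
      { intros z Hz. apply L0. lra. }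
      exists nu.
      assert (S : subdiff h u nu) by (apply (seg_subdiff (u - d') u (h (u - d) - nu * (u - d)) nu); auto; lra).
      split; auto.
      assert (Ehu : h u = al + be * u) by (apply HL; lra).
      assert (Ehk : h k = al + be * k) by (apply HL; lra).
      assert (Hle : nu <= be).
      { pose proof (seg_below (u - d') u _ nu ltac:(lra) ltac:(lra) ltac:(lra) L k ltac:(unfold I01; lra)).
        assert (Hu2 : h u = h (u - d) - nu * (u - d) + nu * u) by (apply L; lra). nra. }
      destruct (Rle_lt_or_eq_dec _ _ Hle) as [|E]; auto. exfalso.
      destruct (Hmax HUu d' Hd') as [z [Hz Hne]]. apply Hne.
      assert (Hu2 : h u = h (u - d) - nu * (u - d) + nu * u) by (apply L; lra).
      rewrite (L z) by lra. rewrite E in *. lra.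
    + destruct (Req_dec u 0) as [->|Hu0].
      * exists (be - 1). split. lra. intros y Hy.
        pose proof (seg_below 0 k al be ltac:(lra) Huk ltac:(lra) HL y Hy). rewrite (HL 0) by lra.
        destruct Hy. nra.
      * assert (Iu : I01 u) by (unfold I01; lra).
        destruct (not_U u Iu HUu) as [Ef|Eg].
        -- destruct (subdiff_exists (Iphi f) u (Iphi_convex f Hf) ltac:(lra)) as [m Sm].
           exists m. split.
           ++ destruct (Rlt_or_le m be) as [|Hge]; auto. exfalso.
              set (y := (u + k) / 2). destruct (HUin y ltac:(unfold y; lra)) as [Iy [Hy _]].
              pose proof (Sm y Iy). rewrite (HL y) in Hy by (unfold y; lra).
              assert (h u = al + be * u) by (apply HL; lra). unfold y in *. nra.
           ++ intros y Hy. pose proof (Sm y Hy). pose proof (hbounds y Hy). lra.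
        -- exfalso. apply HN. apply (tangent_conda u k al be u); auto; try lra.
  - destruct (low_left u k al be Hu Huk ltac:(lra) HL HUk) as [k1 [Hk1 S1]].
    destruct (up_left u k al be Hu Huk ltac:(lra) HL HUin') as [k2 [Hk2 S2]].
    { destruct (Req_dec u 0) as [->|Hu0]. left; auto. right. split. lra.
      destruct (classic (U u)) as [[_ [_ X]]|HUu]; auto.
      assert (Iu : I01 u) by (unfold I01; lra).
      pose proof (hbounds u Iu).
      destruct (Req_dec (h u) (Iphi g u)) as [Eg|]; [|lra]. exfalso. apply HN.
      apply (tangent_conda u k al be u); auto; lra. }
    exists (Rmin k1 k2). split. apply Rmin_pos; auto.
    intros y Hy. specialize (S1 y Hy). specialize (S2 y Hy).
    pose proof (Rmin_l k1 k2). pose proof (Rmin_r k1 k2).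
    split.
    + apply Rle_trans with (k1 * (y - u)); auto. apply Rmult_le_compat_r; lra.
    + apply Rle_trans with (k2 * (y - u)); auto. apply Rmult_le_compat_r; lra.
Qed.

Lemma outer_right k w al be : k < w -> w <= 1 -> U k -> LN k w al be ->
  (forall y, k < y < w -> U y) ->
  (U w -> forall eta, 0 < eta -> exists z, w < z < w + eta /\ h z <> al + be * z) ->
  ~ cond_a h (Iphi g) k w ->
  (exists mw, be < mw /\ subdiff h w mw) /\
  (exists kap, 0 < kap /\ forall y, k <= y <= w -> kap * (w - y) <= h y - Iphi f y /\ kap * (w - y) <= Iphi g y - h y).
Proof.
  intros Hkw Hw HUk HL HUin Hmax HN.
  pose proof (U_int k HUk) as Hk.
  assert (HUin' : forall y, k <= y < w -> U y).
  { intros y Hy. destruct (Req_dec y k) as [->|]; auto. apply HUin; lra. }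
  split.
  - destruct (classic (U w)) as [HUw|HUw].
    + pose proof (U_int w HUw) as Hw'.
      destruct (L1R w HUw) as [d [Hd HA]].
      set (d' := Rmin d (1 - w)).
      assert (Hd' : 0 < d') by (unfold d'; apply Rmin_pos; lra).
      assert (Hd'd : d' <= d) by apply Rmin_l.
      assert (Hd'u : d' <= 1 - w) by apply Rmin_r.
      pose proof (AF_LN w (w + d) ltac:(lra) HA) as L0.
      set (nu := (h (w + d) - h w) / (w + d - w)) in L0.
      assert (L : LN w (w + d') (h w - nu * w) nu).
      { intros z Hz. apply L0. lra. }
      exists nu.
      assert (S : subdiff h w nu) by (apply (seg_subdiff w (w + d') (h w - nu * w) nu); auto; lra).
      split; auto.
      assert (Ehw : h w = al + be * w) by (apply HL; lra).
      assert (Ehk : h k = al + be * k) by (apply HL; lra).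
      assert (Hle : be <= nu).
      { pose proof (seg_below w (w + d') _ nu ltac:(lra) ltac:(lra) ltac:(lra) L k ltac:(unfold I01; lra)).
        nra. }
      destruct (Rle_lt_or_eq_dec _ _ Hle) as [|E]; auto. exfalso.
      destruct (Hmax HUw d' Hd') as [z [Hz Hne]]. apply Hne.
      rewrite (L z) by lra. rewrite <- E in *. lra.
    + destruct (Req_dec w 1) as [->|Hw1].
      * exists (be + 1). split. lra. intros y Hy.
        pose proof (seg_below k 1 al be ltac:(lra) Hkw ltac:(lra) HL y Hy). rewrite (HL 1) by lra.
        destruct Hy. nra.
      * assert (Iw : I01 w) by (unfold I01; lra).
        destruct (not_U w Iw HUw) as [Ef|Eg].
        -- destruct (subdiff_exists (Iphi f) w (Iphi_convex f Hf) ltac:(lra)) as [m Sm].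
           exists m. split.
           ++ destruct (Rlt_or_le be m) as [|Hge]; auto. exfalso.
              set (y := (k + w) / 2). destruct (HUin y ltac:(unfold y; lra)) as [Iy [Hy _]].
              pose proof (Sm y Iy). rewrite (HL y) in Hy by (unfold y; lra).
              assert (h w = al + be * w) by (apply HL; lra). unfold y in *. nra.
           ++ intros y Hy. pose proof (Sm y Hy). pose proof (hbounds y Hy). lra.
        -- exfalso. apply HN. apply (tangent_conda k w al be w); auto; try lra.
  - destruct (low_right k w al be ltac:(lra) Hkw Hw HL HUk) as [k1 [Hk1 S1]].
    destruct (up_right k w al be ltac:(lra) Hkw Hw HL HUin') as [k2 [Hk2 S2]].
    { destruct (Req_dec w 1) as [->|Hw1]. left; auto. right. split. lra.
      destruct (classic (U w)) as [[_ [_ X]]|HUw]; auto.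
      assert (Iw : I01 w) by (unfold I01; lra).
      pose proof (hbounds w Iw).
      destruct (Req_dec (h w) (Iphi g w)) as [Eg|]; [|lra]. exfalso. apply HN.
      apply (tangent_conda k w al be w); auto; lra. }
    exists (Rmin k1 k2). split. apply Rmin_pos; auto.
    intros y Hy. specialize (S1 y Hy). specialize (S2 y Hy).
    pose proof (Rmin_l k1 k2). pose proof (Rmin_r k1 k2).
    split.
    + apply Rle_trans with (k1 * (w - y)); auto. apply Rmult_le_compat_r; lra.
    + apply Rle_trans with (k2 * (w - y)); auto. apply Rmult_le_compat_r; lra.
Qed.

Lemma h_ed b : I01 b -> forall e, 0 < e -> exists d, 0 < d /\ forall y, I01 y -> Rabs (y - b) < d -> Rabs (h y - h b) < e.
Proof. intros Hb. destruct Hh as [Hc _]. apply within_ed. apply Hc; auto. Qed.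

Lemma cont_left_eq u b al be : 0 <= u -> u < b -> b <= 1 ->
  (forall z, u <= z < b -> h z = al + be * z) -> h b = al + be * b.
Proof.
  intros Hu Hub Hb HL. apply NNPP. intros Hne.
  set (D := Rabs (h b - (al + be * b))).
  assert (HD : 0 < D) by (apply Rabs_pos_lt; lra).
  destruct (h_ed b ltac:(unfold I01; lra) (D / 2) ltac:(lra)) as [d [Hd Hc]].
  assert (Hbe : 0 < Rabs be + 1) by (pose proof (Rabs_pos be); lra).
  set (r := Rmin (Rmin (d / 2) ((b - u) / 2)) (D / (4 * (Rabs be + 1)))).
  assert (Hr : 0 < r) by (unfold r; repeat apply Rmin_pos; try apply Rdiv_lt_0_compat; lra).
  assert (Hr1 : r <= d / 2) by (unfold r; eapply Rle_trans; [apply Rmin_l|apply Rmin_l]).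
  assert (Hr2 : r <= (b - u) / 2) by (unfold r; eapply Rle_trans; [apply Rmin_l|apply Rmin_r]).
  assert (Hr3 : r <= D / (4 * (Rabs be + 1))) by (unfold r; apply Rmin_r).
  specialize (Hc (b - r) ltac:(unfold I01; lra) ltac:(replace (b - r - b) with (- r) by ring; rewrite Rabs_Ropp, Rabs_right; lra)).
  rewrite HL in Hc by lra.
  assert (Q1 : Rabs (be * r) <= D / 4).
  { rewrite Rabs_mult, (Rabs_right r) by lra.
    apply Rle_trans with ((Rabs be + 1) * r). pose proof (Rabs_pos be). apply Rmult_le_compat_r; lra.
    apply Rle_trans with ((Rabs be + 1) * (D / (4 * (Rabs be + 1)))). apply Rmult_le_compat_l; lra.
    right; field; lra. }
  assert (Q2 : Rabs (h b - (al + be * b)) <= Rabs (al + be * (b - r) - h b) + Rabs (be * r)).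
  { replace (h b - (al + be * b)) with (- (al + be * (b - r) - h b) - be * r) by ring.
    unfold Rminus at 1. eapply Rle_trans. apply Rabs_triang. rewrite !Rabs_Ropp. lra. }
  fold D in Q2. lra.
Qed.

Lemma cont_right_eq a u al be : 0 <= a -> a < u -> u <= 1 ->
  (forall z, a < z <= u -> h z = al + be * z) -> h a = al + be * a.
Proof.
  intros Ha Hau Hu HL. apply NNPP. intros Hne.
  set (D := Rabs (h a - (al + be * a))).
  assert (HD : 0 < D) by (apply Rabs_pos_lt; lra).
  destruct (h_ed a ltac:(unfold I01; lra) (D / 2) ltac:(lra)) as [d [Hd Hc]].
  assert (Hbe : 0 < Rabs be + 1) by (pose proof (Rabs_pos be); lra).
  set (r := Rmin (Rmin (d / 2) ((u - a) / 2)) (D / (4 * (Rabs be + 1)))).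
  assert (Hr : 0 < r) by (unfold r; repeat apply Rmin_pos; try apply Rdiv_lt_0_compat; lra).
  assert (Hr1 : r <= d / 2) by (unfold r; eapply Rle_trans; [apply Rmin_l|apply Rmin_l]).
  assert (Hr2 : r <= (u - a) / 2) by (unfold r; eapply Rle_trans; [apply Rmin_l|apply Rmin_r]).
  assert (Hr3 : r <= D / (4 * (Rabs be + 1))) by (unfold r; apply Rmin_r).
  specialize (Hc (a + r) ltac:(unfold I01; lra) ltac:(replace (a + r - a) with r by ring; rewrite Rabs_right; lra)).
  rewrite HL in Hc by lra.
  assert (Q1 : Rabs (be * r) <= D / 4).
  { rewrite Rabs_mult, (Rabs_right r) by lra.
    apply Rle_trans with ((Rabs be + 1) * r). pose proof (Rabs_pos be). apply Rmult_le_compat_r; lra.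
    apply Rle_trans with ((Rabs be + 1) * (D / (4 * (Rabs be + 1)))). apply Rmult_le_compat_l; lra.
    right; field; lra. }
  assert (Q2 : Rabs (h a - (al + be * a)) <= Rabs (al + be * (a + r) - h a) + Rabs (be * r)).
  { replace (h a - (al + be * a)) with (- (al + be * (a + r) - h a) + be * r) by ring.
    eapply Rle_trans. apply Rabs_triang. rewrite !Rabs_Ropp. lra. }
  fold D in Q2. lra.
Qed.

Definition rs q := epsilon (inhabits 0) (fun s => U q -> exists d, 0 < d /\ LN q (q + d) (h q - s * q) s).

Lemma rs_spec q : U q -> exists d, 0 < d /\ LN q (q + d) (h q - rs q * q) (rs q).
Proof.
  intros HU. unfold rs. apply (epsilon_spec (inhabits 0) (fun s => U q -> exists d, 0 < d /\ LN q (q + d) (h q - s * q) s)); auto.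
  destruct (L1R q HU) as [d [Hd HA]]. exists ((h (q + d) - h q) / (q + d - q)). intros _. exists d. split; auto.
  pose proof (AF_LN q (q + d) ltac:(lra) HA). auto.
Qed.

Definition lam q z := (h q - rs q * q) + rs q * z.
Definition Aset q z := U z /\ h z = lam q z.
Definition BS q y := y <= 1 /\ forall z, q <= z < y -> Aset q z.
Definition LS q y := y <= 1 /\ forall z, q - y < z <= q -> Aset q z.

Lemma BS_bound q : bound (BS q). Proof. exists 1. intros y [H _]. auto. Qed.
Lemma BS_ne q : exists y, BS q y.
Proof. exists (Rmin q 1). split. apply Rmin_r. intros z Hz. pose proof (Rmin_l q 1). lra. Qed.
Lemma LS_bound q : bound (LS q). Proof. exists 1. intros y [H _]. auto. Qed.
Lemma LS_ne q : exists y, LS q y.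
Proof. exists 0. split. lra. intros z Hz. lra. Qed.

Definition bq q := proj1_sig (completeness (BS q) (BS_bound q) (BS_ne q)).
Definition cq q := proj1_sig (completeness (LS q) (LS_bound q) (LS_ne q)).
Definition aq q := q - cq q.

Lemma bq_lub q : is_lub (BS q) (bq q). Proof. unfold bq. destruct completeness; auto. Qed.
Lemma cq_lub q : is_lub (LS q) (cq q). Proof. unfold cq. destruct completeness; auto. Qed.

Lemma lam_q q : h q = lam q q.
Proof. unfold lam. ring. Qed.

Lemma p1 q : U q -> q < bq q /\ bq q <= 1 /\ 0 <= aq q /\ aq q <= q.
Proof.
  intros HU. pose proof (U_int q HU) as Hq. destruct (bq_lub q) as [B1 B2]. destruct (cq_lub q) as [C1 C2].
  assert (LS0 : LS q 0) by (split; [lra|intros z Hz; lra]).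
  pose proof (C1 0 LS0) as C0.
  split; [|split; [|split]].
  - destruct (rs_spec q HU) as [d [Hd HL]]. destruct (U_open q HU) as [eta [Heta HO]].
    assert (Hm : 0 < Rmin (Rmin d eta) (1 - q)) by (repeat apply Rmin_pos; lra).
    pose proof (Rmin_l (Rmin d eta) (1 - q)). pose proof (Rmin_r (Rmin d eta) (1 - q)).
    pose proof (Rmin_l d eta). pose proof (Rmin_r d eta).
    set (y := q + Rmin (Rmin d eta) (1 - q) / 2).
    assert (HB : BS q y).
    { split. unfold y; lra. intros z Hz. split. apply HO. apply Rabs_def1; unfold y in Hz; lra.
      rewrite (HL z) by (unfold y in Hz; lra). unfold lam. ring. }
    specialize (B1 y HB). unfold y in B1. lra.
  - apply B2. intros y [Hy _]. auto.
  - unfold aq.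
    assert (cq q <= q).
    { apply C2. intros y [Hy1 Hy2]. destruct (Rle_or_lt y q); auto. exfalso.
      destruct (Hy2 ((q - y) / 2) ltac:(lra)) as [HUz _]. pose proof (U_int _ HUz). lra. }
    lra.
  - unfold aq. lra.
Qed.

Lemma p2 q : U q -> forall z, aq q < z < bq q -> Aset q z.
Proof.
  intros HU z Hz. destruct (bq_lub q) as [B1 B2]. destruct (cq_lub q) as [C1 C2].
  destruct (Rle_or_lt q z) as [Hqz|Hqz].
  - apply NNPP. intros Hn.
    assert (bq q <= z).
    { apply B2. intros y [Hy1 Hy2]. destruct (Rle_or_lt y z); auto. exfalso. apply Hn. apply Hy2. lra. }
    lra.
  - apply NNPP. intros Hn. unfold aq in Hz.
    assert (cq q <= q - z).
    { apply C2. intros y [Hy1 Hy2]. destruct (Rle_or_lt y (q - z)); auto. exfalso. apply Hn. apply Hy2. lra. }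
    lra.
Qed.

Lemma p3 q : U q -> LN (aq q) (bq q) (h q - rs q * q) (rs q).
Proof.
  intros HU. destruct (p1 q HU) as [P1 [P2 [P3 P4]]]. pose proof (U_int q HU).
  assert (Hin : forall z, aq q < z < bq q -> h z = (h q - rs q * q) + rs q * z).
  { intros z Hz. destruct (p2 q HU z Hz) as [_ E]. auto. }
  intros z Hz. destruct (Req_dec z (bq q)) as [->|Hb].
  - apply (cont_left_eq q); [lra|lra|lra|].
    intros w Hw. destruct (Req_dec w q) as [->|]. ring. apply Hin; lra.
  - destruct (Req_dec z (aq q)) as [->|Ha].
    + destruct (Req_dec (aq q) q) as [Eq|Nq]. rewrite Eq. ring.
      apply (cont_right_eq _ q); [lra|lra|lra|].
      intros w Hw. destruct (Req_dec w q) as [->|]. ring. apply Hin; lra.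
    + apply Hin; lra.
Qed.

Lemma p4R q : U q -> U (bq q) -> forall eta, 0 < eta -> exists z, bq q < z < bq q + eta /\ h z <> lam q z.
Proof.
  intros HU HUb eta Heta. apply NNPP. intros Hn.
  destruct (p1 q HU) as [P1 [P2 [P3 P4]]]. pose proof (U_int _ HUb) as Hb.
  destruct (U_open _ HUb) as [et [Het HO]].
  assert (Hm : 0 < Rmin (Rmin eta et) (1 - bq q)) by (repeat apply Rmin_pos; lra).
  pose proof (Rmin_l (Rmin eta et) (1 - bq q)). pose proof (Rmin_r (Rmin eta et) (1 - bq q)).
  pose proof (Rmin_l eta et). pose proof (Rmin_r eta et).
  set (y := bq q + Rmin (Rmin eta et) (1 - bq q) / 2).
  assert (HB : BS q y).
  { split. unfold y; lra. intros z Hz.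
    destruct (Rlt_or_le z (bq q)) as [Hzb|Hzb].
    - destruct (Req_dec z q) as [->|]. split; auto. apply lam_q. apply p2; auto; lra.
    - split. apply HO. apply Rabs_def1; unfold y in Hz; lra.
      destruct (Req_dec z (bq q)) as [->|Hne]. rewrite (p3 q HU (bq q)) by lra. unfold lam; ring.
      apply NNPP. intros Hz'. apply Hn. exists z. split; auto. unfold y in Hz; lra. }
  destruct (bq_lub q) as [B1 _]. specialize (B1 y HB). unfold y in B1. lra.
Qed.

Lemma p4L q : U q -> U (aq q) -> forall eta, 0 < eta -> exists z, aq q - eta < z < aq q /\ h z <> lam q z.
Proof.
  intros HU HUa eta Heta. apply NNPP. intros Hn.
  destruct (p1 q HU) as [P1 [P2 [P3 P4]]]. pose proof (U_int _ HUa) as Ha.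
  destruct (U_open _ HUa) as [et [Het HO]].
  assert (Hm : 0 < Rmin (Rmin eta et) (aq q)) by (repeat apply Rmin_pos; lra).
  pose proof (Rmin_l (Rmin eta et) (aq q)). pose proof (Rmin_r (Rmin eta et) (aq q)).
  pose proof (Rmin_l eta et). pose proof (Rmin_r eta et).
  set (r := Rmin (Rmin eta et) (aq q) / 2).
  assert (HL : LS q (cq q + r)).
  { split. unfold r, aq in *; lra. intros z Hz. unfold aq in *.
    destruct (Rlt_or_le (q - cq q) z) as [Hzb|Hzb].
    - destruct (Req_dec z q) as [->|]. split; auto. apply lam_q. apply p2; auto; unfold aq; lra.
    - split. apply HO. apply Rabs_def1; unfold r in Hz; lra.
      destruct (Req_dec z (q - cq q)) as [->|Hne]. rewrite (p3 q HU (q - cq q)) by (unfold aq; lra). unfold lam; ring.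
      apply NNPP. intros Hz'. apply Hn. exists z. split; auto. unfold r in Hz; lra. }
  destruct (cq_lub q) as [C1 _]. specialize (C1 _ HL). unfold r in C1. lra.
Qed.

Lemma p6 c d al be p : LN c d al be -> c <= p < d -> U p -> rs p = be /\ forall z, lam p z = al + be * z.
Proof.
  intros HL Hp HU. destruct (rs_spec p HU) as [d1 [Hd1 HL1]].
  set (r := Rmin d1 (d - p) / 2).
  assert (Hr : 0 < r) by (unfold r; apply Rdiv_lt_0_compat; [apply Rmin_pos|]; lra).
  assert (Hr1 : r <= d1) by (unfold r; pose proof (Rmin_l d1 (d - p)); lra).
  assert (Hr2 : r < d - p) by (unfold r; pose proof (Rmin_r d1 (d - p)); lra).
  pose proof (HL1 (p + r) ltac:(lra)) as E1. rewrite (HL (p + r)) in E1 by lra.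
  pose proof (HL p ltac:(lra)) as E2.
  assert (Hs : rs p = be).
  { apply (Rmult_eq_reg_l r); [|lra]. rewrite E2 in E1. lra. }
  split; auto. intros z. unfold lam. rewrite Hs, E2. ring.
Qed.

Lemma Aset_in q z : U q -> (z = q \/ aq q < z < bq q) -> Aset q z.
Proof. intros HU [->|Hz]. split; auto. apply lam_q. apply p2; auto. Qed.

Lemma lam_eq q p z0 z1 : z0 <> z1 -> lam q z0 = lam p z0 -> lam q z1 = lam p z1 -> forall z, lam q z = lam p z.
Proof.
  intros Hne E0 E1 z. unfold lam in *.
  assert (Hs : rs q = rs p). { apply (Rmult_eq_reg_l (z0 - z1)); [|lra]. lra. }
  rewrite Hs in *. lra.
Qed.

Lemma Bsub q p z0 : U q -> U p -> (forall z, lam q z = lam p z) ->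
     Rmax (aq q) (aq p) < z0 < Rmin (bq q) (bq p) -> bq p <= bq q /\ aq q <= aq p.
Proof.
  intros Hq Hp HL Hz.
  assert (Tr : forall z, Aset p z -> Aset q z).
  { intros z [HU HE]. split; auto. rewrite HL. auto. }
  pose proof (Rmax_l (aq q) (aq p)). pose proof (Rmax_r (aq q) (aq p)).
  pose proof (Rmin_l (bq q) (bq p)). pose proof (Rmin_r (bq q) (bq p)).
  destruct (p1 q Hq) as [Q1 [Q2 [Q3 Q4]]]. destruct (p1 p Hp) as [R1 [R2 [R3 R4]]].
  split.
  - destruct (bq_lub q) as [B1 _]. apply B1. split; auto. intros z Hz'.
    destruct (Rlt_or_le z (bq q)).
    + apply Aset_in; auto. destruct (Req_dec z q); [left|right]; lra.
    + apply Tr. apply p2; auto; lra.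
  - destruct (cq_lub q) as [C1 _].
    assert (HLS : LS q (q - aq p)).
    { split. lra. intros z Hz'. destruct (Rlt_or_le (aq q) z).
      + apply Aset_in; auto. destruct (Req_dec z q); [left|right]; lra.
      + apply Tr. apply p2; auto; lra. }
    specialize (C1 _ HLS). unfold aq in *. lra.
Qed.

Lemma p5 q p z0 : U q -> U p -> Rmax (aq q) (aq p) < z0 < Rmin (bq q) (bq p) ->
  aq q = aq p /\ bq q = bq p.
Proof.
  intros Hq Hp Hz.
  pose proof (Rmax_l (aq q) (aq p)). pose proof (Rmax_r (aq q) (aq p)).
  pose proof (Rmin_l (bq q) (bq p)). pose proof (Rmin_r (bq q) (bq p)).
  set (z1 := (z0 + Rmin (bq q) (bq p)) / 2).
  assert (A0q : Aset q z0) by (apply p2; auto; lra). assert (A0p : Aset p z0) by (apply p2; auto; lra).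
  assert (A1q : Aset q z1) by (apply p2; auto; unfold z1; lra). assert (A1p : Aset p z1) by (apply p2; auto; unfold z1; lra).
  assert (L : forall z, lam q z = lam p z).
  { apply (lam_eq q p z0 z1). unfold z1; lra.
    destruct A0q as [_ E1]; destruct A0p as [_ E2]; lra.
    destruct A1q as [_ E1]; destruct A1p as [_ E2]; lra. }
  assert (L' : forall z, lam p z = lam q z) by (intros; rewrite L; auto).
  destruct (Bsub q p z0 Hq Hp L Hz).
  destruct (Bsub p q z0 Hp Hq L'). rewrite Rmax_comm, Rmin_comm; auto.
  split; lra.
Qed.

Definition Nidx n := U (en n) /\ forall k, (k < n)%nat -> U (en k) -> ~ (aq (en k) = aq (en n) /\ bq (en k) = bq (en n)).
Definition ai n := aq (en n).
Definition bi n := bq (en n).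

Lemma canon k : U (en k) -> exists m, Nidx m /\ aq (en m) = aq (en k) /\ bq (en m) = bq (en k).
Proof.
  intros HU.
  destruct (min_index (fun j => U (en j) /\ aq (en j) = aq (en k) /\ bq (en j) = bq (en k)) k) as [m [[Hm1 [Hm2 Hm3]] Hmin]].
  { auto. }
  exists m. split; auto. split; auto. intros j Hj HUj [E1 E2]. apply (Hmin j Hj). split; auto. split; congruence.
Qed.

Lemma disj n m : Nidx n -> Nidx m -> n <> m -> bi n <= ai m \/ bi m <= ai n.
Proof.
  intros [Hn Nn] [Hm Nm] Hnm. apply NNPP. intros Hc.
  assert (C1 : ai m < bi n) by (apply Rnot_le_lt; intro; apply Hc; auto).
  assert (C2 : ai n < bi m) by (apply Rnot_le_lt; intro; apply Hc; auto).
  destruct (p1 _ Hn) as [A1 [A2 [A3 A4]]]. destruct (p1 _ Hm) as [B1 [B2 [B3 B4]]].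
  unfold ai, bi in *.
  assert (Hlt : Rmax (aq (en n)) (aq (en m)) < Rmin (bq (en n)) (bq (en m))).
  { apply Rmax_lub_lt; apply Rmin_glb_lt; lra. }
  destruct (p5 (en n) (en m) ((Rmax (aq (en n)) (aq (en m)) + Rmin (bq (en n)) (bq (en m))) / 2) Hn Hm ltac:(lra)) as [E1 E2].
  destruct (Nat.lt_gt_cases n m) as [[H|H] _]. auto.
  - apply (Nm n H Hn). split; auto.
  - apply (Nn m H Hm). split; auto.
Qed.

Lemma cover x : U x -> exists n, Nidx n /\ ai n <= x <= bi n.
Proof.
  intros HU. pose proof (U_int x HU) as Hx.
  destruct (L1R x HU) as [d [Hd HA]]. pose proof (AF_LN x (x + d) ltac:(lra) HA) as HL.
  destruct (U_open x HU) as [eta [Heta HO]].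
  pose proof (Rmin_l d eta). pose proof (Rmin_r d eta). pose proof (Rmin_pos d eta Hd Heta).
  destruct (en_dense x (x + Rmin d eta / 2) ltac:(lra) ltac:(lra)) as [k [Hk1 Hk2]].
  assert (HUk : U (en k)) by (apply HO; apply Rabs_def1; lra).
  destruct (p6 _ _ _ _ (en k) HL ltac:(lra) HUk) as [_ Hlam]. pose proof (U_int _ HUk).
  assert (Ha : aq (en k) <= x).
  { destruct (cq_lub (en k)) as [C1 _]. unfold aq.
    assert (HLS : LS (en k) (en k - x)).
    { split. lra. intros z Hz. split. apply HO; apply Rabs_def1; lra. rewrite Hlam. apply HL; lra. }
    specialize (C1 _ HLS). lra. }
  destruct (p1 _ HUk) as [P1 _].
  destruct (canon k HUk) as [m [Hm [E1 E2]]]. exists m. split; auto. unfold ai, bi. rewrite E1, E2. lra.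
Qed.

Lemma nbR n : Nidx n -> U (bi n) -> exists m, Nidx m /\ ai m = bi n.
Proof.
  intros [HUn Nn] HUb. pose proof (U_int (bi n) HUb) as Hb.
  destruct (L1R (bi n) HUb) as [d [Hd HA]]. pose proof (AF_LN (bi n) (bi n + d) ltac:(lra) HA) as HL.
  destruct (U_open (bi n) HUb) as [eta [Heta HO]].
  pose proof (Rmin_l d eta). pose proof (Rmin_r d eta). pose proof (Rmin_pos d eta Hd Heta).
  destruct (en_dense (bi n) (bi n + Rmin d eta / 2) ltac:(lra) ltac:(lra)) as [k [Hk1 Hk2]].
  assert (HUk : U (en k)) by (apply HO; apply Rabs_def1; lra).
  destruct (p6 _ _ _ _ (en k) HL ltac:(lra) HUk) as [_ Hlam]. pose proof (U_int _ HUk).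
  assert (Ha : aq (en k) <= bi n).
  { destruct (cq_lub (en k)) as [C1 _]. unfold aq.
    assert (HLS : LS (en k) (en k - bi n)).
    { split. lra. intros z Hz. split. apply HO; apply Rabs_def1; lra. rewrite Hlam. apply HL; lra. }
    specialize (C1 _ HLS). lra. }
  destruct (p1 _ HUk) as [P1 _]. destruct (p1 _ HUn) as [Q1 [Q2 [Q3 Q4]]].
  assert (Ha' : aq (en k) = bi n).
  { destruct (Rle_lt_or_eq_dec _ _ Ha) as [Hlt|]; auto. exfalso.
    unfold bi in *.
    assert (Hm : Rmax (aq (en k)) (aq (en n)) < bq (en n)) by (apply Rmax_lub_lt; lra).
    assert (Hmi : Rmin (bq (en k)) (bq (en n)) = bq (en n)) by (rewrite Rmin_right; auto; lra).
    destruct (p5 (en k) (en n) ((Rmax (aq (en k)) (aq (en n)) + bq (en n)) / 2) HUk HUn ltac:(rewrite Hmi; lra)) as [_ E].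
    lra. }
  destruct (canon k HUk) as [m [Hm [E1 E2]]]. exists m. split; auto. unfold ai. rewrite E1. auto.
Qed.

Lemma nbL n : Nidx n -> U (ai n) -> exists m, Nidx m /\ bi m = ai n.
Proof.
  intros [HUn Nn] HUa. pose proof (U_int (ai n) HUa) as Ha.
  destruct (L1L (ai n) HUa) as [d [Hd HA]]. pose proof (AF_LN (ai n - d) (ai n) ltac:(lra) HA) as HL.
  destruct (U_open (ai n) HUa) as [eta [Heta HO]].
  assert (Hr : 0 < Rmin (Rmin d eta) (ai n)) by (repeat apply Rmin_pos; lra).
  pose proof (Rmin_l (Rmin d eta) (ai n)). pose proof (Rmin_r (Rmin d eta) (ai n)). pose proof (Rmin_l d eta). pose proof (Rmin_r d eta).
  set (r := Rmin (Rmin d eta) (ai n)) in *.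
  destruct (en_dense (ai n - r / 2) (ai n) ltac:(lra) ltac:(lra)) as [k [Hk1 Hk2]].
  assert (HUk : U (en k)) by (apply HO; apply Rabs_def1; lra).
  destruct (p6 _ _ _ _ (en k) HL ltac:(lra) HUk) as [_ Hlam]. pose proof (U_int _ HUk).
  assert (Hb : ai n <= bq (en k)).
  { destruct (bq_lub (en k)) as [B1 _]. apply B1. split. lra.
    intros z Hz. split. apply HO; apply Rabs_def1; lra. rewrite Hlam. apply HL; lra. }
  destruct (p1 _ HUk) as [P1 [P2 [P3 P4]]]. destruct (p1 _ HUn) as [Q1 [Q2 [Q3 Q4]]].
  assert (Hb' : bq (en k) = ai n).
  { destruct (Rle_lt_or_eq_dec _ _ Hb) as [Hlt|]; auto. exfalso.
    unfold ai in *.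
    assert (Hm : aq (en n) < Rmin (bq (en k)) (bq (en n))) by (apply Rmin_glb_lt; lra).
    assert (Hma : Rmax (aq (en k)) (aq (en n)) = aq (en n)) by (rewrite Rmax_right; auto; lra).
    destruct (p5 (en k) (en n) ((aq (en n) + Rmin (bq (en k)) (bq (en n))) / 2) HUk HUn ltac:(rewrite Hma; lra)) as [E _].
    lra. }
  destruct (canon k HUk) as [m [Hm [E1 E2]]]. exists m. split; auto. unfold bi. rewrite E2. auto.
Qed.

Lemma piece_LN n : Nidx n -> LN (ai n) (bi n) (h (en n) - rs (en n) * en n) (rs (en n)).
Proof. intros [HU _]. apply p3; auto. Qed.

Lemma piece_U n : Nidx n -> forall y, ai n < y < bi n -> U y.
Proof. intros [HU _] y Hy. destruct (p2 (en n) HU y Hy); auto. Qed.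

Lemma kink_lt n m : Nidx n -> Nidx m -> bi n = ai m -> U (bi n) -> rs (en n) < rs (en m).
Proof.
  intros Hn Hm E HUk. pose proof (piece_LN n Hn) as Ln. pose proof (piece_LN m Hm) as Lm.
  destruct Hn as [HUn _]. destruct Hm as [HUm _].
  destruct (p1 _ HUn) as [A1 [A2 [A3 A4]]]. destruct (p1 _ HUm) as [B1 [B2 [B3 B4]]].
  unfold ai, bi in *.
  assert (Hk : h (bq (en n)) = h (en n) - rs (en n) * en n + rs (en n) * bq (en n)) by (apply Ln; lra).
  assert (Hk' : h (bq (en n)) = h (en m) - rs (en m) * en m + rs (en m) * bq (en n)) by (apply Lm; lra).
  assert (Hle : rs (en n) <= rs (en m)).
  { pose proof (seg_below (aq (en n)) (bq (en n)) _ _ ltac:(lra) ltac:(lra) ltac:(lra) Ln (bq (en m)) ltac:(unfold I01; lra)) as S.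
    rewrite (Lm (bq (en m))) in S by lra. nra. }
  destruct (Rle_lt_or_eq_dec _ _ Hle) as [|Eq]; auto. exfalso.
  destruct (p4R (en n) HUn HUk (bq (en m) - bq (en n)) ltac:(lra)) as [z [Hz Hne]].
  apply Hne. rewrite (Lm z) by lra. unfold lam. rewrite Eq in *. lra.
Qed.

Lemma cond_right n : Nidx n -> ~ cond_a h (Iphi g) (ai n) (bi n) ->
  h (bi n) = Iphi f (bi n) \/ exists m, Nidx m /\ bi n = ai m /\ cond_a h (Iphi g) (ai m) (bi m).
Proof.
  intros Hn HN. destruct (classic (h (bi n) = Iphi f (bi n))) as [|Hne]; [left; auto|right].
  pose proof Hn as [HUn _]. pose proof (U_int _ HUn). destruct (p1 _ HUn) as [A1 [A2 [A3 A4]]].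
  fold (bi n) (ai n) in *.
  assert (Hb1 : bi n < 1).
  { destruct (Req_dec (bi n) 1) as [E|]; [|lra]. exfalso. apply Hne. rewrite E. apply h1. }
  destruct (classic (U (bi n))) as [HUb|HUb].
  2: { exfalso. destruct (not_U (bi n) ltac:(unfold I01; lra) HUb) as [|Eg]; [contradiction|].
       apply HN. apply (tangent_conda (ai n) (bi n) _ _ (bi n) ltac:(lra) ltac:(lra) ltac:(lra) (piece_LN n Hn)); auto; lra. }
  destruct (nbR n Hn HUb) as [m [Hm Em]]. exists m. split; auto. split; auto.
  apply NNPP. intros HNm.
  pose proof Hm as [HUm _]. destruct (p1 _ HUm) as [B1 [B2 [B3 B4]]]. fold (bi m) (ai m) in *.
  pose proof (piece_LN m Hm) as Lm. rewrite Em in Lm. rewrite Em in HNm.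
  destruct (outer_left (ai n) (bi n) _ _ A3 ltac:(lra) HUb (piece_LN n Hn) (piece_U n Hn) (p4L (en n) HUn) HN) as [[mu [Hmu Su]] SL].
  destruct (outer_right (bi n) (bi m) _ _ ltac:(lra) B2 HUb Lm ltac:(intros; apply (piece_U m Hm); lra) (p4R (en m) HUm) HNm) as [[mw [Hmw Sw]] SR].
  pose proof (kink_lt n m Hn Hm ltac:(auto) HUb).
  apply (tent (ai n) (bi n) (bi m) _ _ _ _ mu mw A3 ltac:(lra) ltac:(lra) B2 (piece_LN n Hn) Lm); auto.
Qed.

Lemma cond_left n : Nidx n -> ~ cond_a h (Iphi g) (ai n) (bi n) ->
  h (ai n) = Iphi f (ai n) \/ exists m, Nidx m /\ bi m = ai n /\ cond_a h (Iphi g) (ai m) (bi m).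
Proof.
  intros Hn HN. destruct (classic (h (ai n) = Iphi f (ai n))) as [|Hne]; [left; auto|right].
  pose proof Hn as [HUn _]. pose proof (U_int _ HUn). destruct (p1 _ HUn) as [A1 [A2 [A3 A4]]].
  fold (bi n) (ai n) in *.
  assert (Ha0 : 0 < ai n).
  { destruct (Req_dec (ai n) 0) as [E|]; [|lra]. exfalso. apply Hne. rewrite E. apply h0. }
  destruct (classic (U (ai n))) as [HUa|HUa].
  2: { exfalso. destruct (not_U (ai n) ltac:(unfold I01; lra) HUa) as [|Eg]; [contradiction|].
       apply HN. apply (tangent_conda (ai n) (bi n) _ _ (ai n) ltac:(lra) ltac:(lra) ltac:(lra) (piece_LN n Hn)); auto; lra. }
  destruct (nbL n Hn HUa) as [m [Hm Em]]. exists m. split; auto. split; auto.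
  apply NNPP. intros HNm.
  pose proof Hm as [HUm _]. destruct (p1 _ HUm) as [B1 [B2 [B3 B4]]]. fold (bi m) (ai m) in *.
  pose proof (piece_LN m Hm) as Lm. rewrite Em in Lm. rewrite Em in HNm.
  destruct (outer_left (ai m) (ai n) _ _ B3 ltac:(lra) HUa Lm ltac:(intros; apply (piece_U m Hm); lra) (p4L (en m) HUm) HNm) as [[mu [Hmu Su]] SL].
  destruct (outer_right (ai n) (bi n) _ _ ltac:(lra) A2 HUa (piece_LN n Hn) (piece_U n Hn) (p4R (en n) HUn) HN) as [[mw [Hmw Sw]] SR].
  pose proof (kink_lt m n Hm Hn ltac:(auto) ltac:(rewrite Em; auto)).
  apply (tent (ai m) (ai n) (bi n) _ _ _ _ mu mw B3 ltac:(lra) ltac:(lra) A2 Lm (piece_LN n Hn)); auto.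
Qed.

Lemma forward : interval_structure f g h.
Proof.
  exists Nidx, ai, bi. split; [|split; [|split]].
  - intros n [HU _]. destruct (p1 _ HU) as [A1 [A2 [A3 A4]]]. unfold ai, bi. lra.
  - apply disj.
  - intros x Hx Hno. destruct (classic (U x)) as [HU|HU].
    + exfalso. destruct (cover x HU) as [n [Hn Hxn]]. apply (Hno n Hn Hxn).
    + apply not_U; auto.
  - intros n Hn. split; [|split].
    + exists (h (en n) - rs (en n) * en n), (rs (en n)). apply piece_LN; auto.
    + intros x Hx. destruct (piece_U n Hn x Hx) as [_ X]. auto.
    + destruct (classic (cond_a h (Iphi g) (ai n) (bi n))) as [|HN]; [left; auto|right].
      intros x [Ex|Ex]; subst x.
      * destruct (cond_left n Hn HN) as [|[m [Hm [E C]]]]; [left; auto|right].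
        exists m. refine (conj Hm (conj _ C)). left. split; auto.
      * destruct (cond_right n Hn HN) as [|[m [Hm [E C]]]]; [left; auto|right].
        exists m. refine (conj Hm (conj _ C)). right. split; auto.
Qed.
End Fwd.


Theorem corollary2 (f g : R -> R) :
  inF f -> inF g -> cont01 g -> majorizes f g ->
  forall h : R -> R, inIfg f g h ->
    (extreme_Ifg f g h <-> interval_structure f g h).
Proof.
  intros Hf Hg Hgc Hmaj h Hh. split.
  - intros Hext. apply (forward f g h Hf Hg Hgc Hmaj Hh Hext).
  - intros HS. apply backward; auto.
Qed.
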